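(* Let $\alpha>1$ and let $h_0\ge0$ be an integer. Let $D_0=[-\lceil h_0^\alpha\rceil,\lceil h_0^\alpha\rceil]\times[0,h_0]$, $U_{h_0}=\{x\in\mathbb{H}:\ |x_1|\ge\lceil h_0^\alpha\rceil,\ x_2\le|x_1|^{1/\alpha}\}$, $\hat W=D_0\cup U_{h_0}$, and $\xi_0=(0,h_0)$. Then there is a constant $c>0$ such that for all sufficiently large $k$, $$P_{\xi_0}\big(\tau_{L_{2^k}}<\tau_{\hat W}\big)\ge c\,2^{-k}\qquad\text{and}\qquad \bar{\mathcal H}_{\hat W,N}(\xi_0)\ge c\ \text{ for all sufficiently large } N.$$
   Context: $\mathbb{H}=\{(x_1,x_2)\in\mathbb{Z}^2:\ x_2\ge 0\}$ and $L_n=\{(x_1,n):x_1\in\mathbb{Z}\}$. $(S_n)_{n\ge0}$ is a simple random walk on $\mathbb{Z}^2$; $P_z$ denotes its law started at $z$. For $A\subset\mathbb{Z}^2$, $\bar\tau_A=\min\{n\ge0: S_n\in A\}$ and $\tau_A=\min\{n\ge1:S_n\in A\}$. For $A\subset\mathbb{H}$, $x\in A$ and $N\ge1$, define $$\bar{\mathcal H}_{A,N}(x)=\sum_{z\in L_N\setminus A}P_z\big(S_{\bar\tau_{A\cup L_0}}=x\big).$$ Integer intervals $[a,b]$ denote $\{a,a+1,\dots,b\}$. *)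

(* Defs.v *)
From Stdlib Require Import Reals ZArith Lra Lia Classical ClassicalEpsilon.
Open Scope R_scope.

Definition point : Type := (Z * Z)%type.
Definition zset : Type := point -> Prop.

Definition pif {T : Type} (P : Prop) (a b : T) : T :=
  if excluded_middle_informative P then a else b.

Definition Plim (u : nat -> R) : R :=
  epsilon (inhabits 0) (fun l => Un_cv u l).

Definition avg4 (f : point -> R) (z : point) : R :=
  let '(a, b) := z in
  / 4 * (f ((a + 1)%Z, b) + f ((a - 1)%Z, b) + f (a, (b + 1)%Z) + f (a, (b - 1)%Z)).

Definition HH : zset := fun x => (0 <= snd x)%Z.
Definition Lline (n : Z) : zset := fun x => snd x = n.
Definition setU (A B : zset) : zset := fun x => A x \/ B x.

(* bar-version: probability, starting at z (time 0 counts), that B is hit within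
   n steps strictly before A (i.e. bar tau_B < bar tau_A) *)
Fixpoint barBefore (A B : zset) (n : nat) (z : point) : R :=
  pif (A z) 0 (pif (B z) 1
    (match n with O => 0 | S m => avg4 (barBefore A B m) z end)).

(* P_z(tau_B < tau_A), with tau = first hitting time at times >= 1 *)
Definition ProbBefore (z : point) (B A : zset) : R :=
  Plim (fun n => avg4 (barBefore A B n) z).

(* probability, starting at z, that bar tau_A <= n and S_{bar tau_A} = x *)
Fixpoint hitAt (A : zset) (x : point) (n : nat) (z : point) : R :=
  pif (A z) (pif (z = x) 1 0)
    (match n with O => 0 | S m => avg4 (hitAt A x m) z end).

(* P_z(S_{bar tau_A} = x) *)
Definition HitProb (z : point) (A : zset) (x : point) : R :=
  Plim (fun n => hitAt A x n z).

(* \bar H_{A,N}(x) = sum_{z in L_N \ A} P_z(S_{bar tau_{A u L_0}} = x),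
   the series over z_1 in Z taken as limit of symmetric partial sums
   over z_1 in [-M, M] (nonnegative terms). *)
Definition HbarTerm (A : zset) (N : Z) (x : point) (z1 : Z) : R :=
  pif (A (z1, N)) 0 (HitProb (z1, N) (setU A (Lline 0)) x).

Definition Hbar (A : zset) (N : Z) (x : point) : R :=
  Plim (fun M => sum_f_R0 (fun i => HbarTerm A N x (Z.of_nat i - Z.of_nat M)%Z)
                          (2 * M)).

(* real power x^a for x >= 0, with 0^a = 0 *)
Definition powR (x a : R) : R := pif (x = 0) 0 (Rpower x a).

Definition ceilR (x : R) : Z := (- Int_part (- x))%Z.

Definition D0 (alpha : R) (h0 : Z) : zset := fun x =>
  let c := ceilR (powR (IZR h0) alpha) in
  (- c <= fst x <= c)%Z /\ (0 <= snd x <= h0)%Z.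

Definition Uh0 (alpha : R) (h0 : Z) : zset := fun x =>
  HH x /\ (ceilR (powR (IZR h0) alpha) <= Z.abs (fst x))%Z /\
  IZR (snd x) <= powR (IZR (Z.abs (fst x))) (/ alpha).

Definition What (alpha : R) (h0 : Z) : zset := setU (D0 alpha h0) (Uh0 alpha h0).

(* Main.v *)
Require Import Defs.
From Stdlib Require Import Reals ZArith Lra Lia Classical ClassicalEpsilon List FunctionalExtensionality.
Open Scope R_scope.

Lemma pif_T {T} (P:Prop) (a b:T) : P -> pif P a b = a.
Proof. intros H; unfold pif; destruct (excluded_middle_informative P); tauto. Qed.
Lemma pif_F {T} (P:Prop) (a b:T) : ~P -> pif P a b = b.
Proof. intros H; unfold pif; destruct (excluded_middle_informative P); tauto. Qed.

Lemma Plim_cv (u : nat -> R) l : Un_cv u l -> Plim u = l.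
Proof.
  intros H. unfold Plim.
  assert (H1 := epsilon_spec (inhabits 0) (fun l => Un_cv u l) (ex_intro _ l H)).
  eapply UL_sequence; eauto.
Qed.

Lemma mono_cv (u: nat -> R) M : (forall n, u n <= u (S n)) -> (forall n, u n <= M) ->
  Un_cv u (Plim u).
Proof.
  intros Hg Hb. destruct (growing_cv u Hg) as [l Hl].
  { exists M. intros x [n ->]. apply Hb. }
  rewrite (Plim_cv u l Hl). exact Hl.
Qed.

Lemma avg4_mono f g z : (forall w, f w <= g w) -> avg4 f z <= avg4 g z.
Proof. intros H. destruct z as [a b]. unfold avg4.
  pose proof (H ((a+1)%Z,b)); pose proof (H ((a-1)%Z,b)); pose proof (H (a,(b+1)%Z)); pose proof (H (a,(b-1)%Z)). lra. Qed.

Lemma avg4_nonneg f z : (forall w, 0 <= f w) -> 0 <= avg4 f z.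
Proof. intros H. destruct z as [a b]. unfold avg4.
  pose proof (H ((a+1)%Z,b)); pose proof (H ((a-1)%Z,b)); pose proof (H (a,(b+1)%Z)); pose proof (H (a,(b-1)%Z)). lra. Qed.

Lemma avg4_le1 f z : (forall w, f w <= 1) -> avg4 f z <= 1.
Proof. intros H. destruct z as [a b]. unfold avg4.
  pose proof (H ((a+1)%Z,b)); pose proof (H ((a-1)%Z,b)); pose proof (H (a,(b+1)%Z)); pose proof (H (a,(b-1)%Z)). lra. Qed.

Lemma cv_shift (u : nat -> R) l : Un_cv u l -> Un_cv (fun n => u (S n)) l.
Proof. intros H e He. destruct (H e He) as [N HN]. exists N. intros n Hn. apply HN. lia. Qed.

Lemma cv_avg4 (f : nat -> point -> R) (L : point -> R) z :
  (forall w, Un_cv (fun n => f n w) (L w)) -> Un_cv (fun n => avg4 (f n) z) (avg4 L z).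
Proof.
  intros H. destruct z as [a b]. unfold avg4.
  apply CV_mult. { intros e He. exists 0%nat. intros. unfold R_dist. rewrite Rminus_diag, Rabs_R0. lra. }
  repeat apply CV_plus; apply H.
Qed.

Lemma bb_bounds A B n z : 0 <= barBefore A B n z <= 1.
Proof.
  revert z; induction n; intros z; simpl; unfold pif;
  destruct (excluded_middle_informative (A z)); try lra;
  destruct (excluded_middle_informative (B z)); try lra.
  split; [apply avg4_nonneg|apply avg4_le1]; intros w; apply IHn.
Qed.

Lemma bb_mono A B n z : barBefore A B n z <= barBefore A B (S n) z.
Proof.
  revert z; induction n; intros z.
  - change (barBefore A B 1 z) with (pif (A z) 0 (pif (B z) 1 (avg4 (barBefore A B 0) z))).
    change (barBefore A B 0 z) with (pif (A z) 0 (pif (B z) 1 0)).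
    unfold pif;
    destruct (excluded_middle_informative (A z)); try lra;
    destruct (excluded_middle_informative (B z)); try lra.
    apply avg4_nonneg. intros; apply bb_bounds.
  - change (barBefore A B (S n) z) with (pif (A z) 0 (pif (B z) 1 (avg4 (barBefore A B n) z))).
    change (barBefore A B (S (S n)) z) with (pif (A z) 0 (pif (B z) 1 (avg4 (barBefore A B (S n)) z))).
    unfold pif;
    destruct (excluded_middle_informative (A z)); try lra;
    destruct (excluded_middle_informative (B z)); try lra.
    apply avg4_mono. intros; apply IHn.
Qed.

Definition ubb A B z := Plim (fun n => barBefore A B n z).

Lemma ubb_cv A B z : Un_cv (fun n => barBefore A B n z) (ubb A B z).
Proof. apply (mono_cv _ 1). intros; apply bb_mono. intros; apply bb_bounds. Qed.

Lemma ubb_nonneg A B z : 0 <= ubb A B z.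
Proof.
  pose proof (growing_ineq _ _ (fun n => bb_mono A B n z) (ubb_cv A B z) 0).
  pose proof (bb_bounds A B 0 z). lra.
Qed.

Lemma const_cv (c : R) (u : nat -> R) l : (forall n, u n = c) -> Un_cv u l -> l = c.
Proof. intros H Hu. apply (UL_sequence u); auto.
  intros e He. exists 0%nat. intros. rewrite H. unfold R_dist. rewrite Rminus_diag, Rabs_R0. lra. Qed.

Lemma ubb_A A B z : A z -> ubb A B z = 0.
Proof. intros H. apply (const_cv 0 (fun n => barBefore A B n z)); [|apply ubb_cv].
  intros n; destruct n; simpl; apply pif_T; auto. Qed.

Lemma ubb_B A B z : ~ A z -> B z -> ubb A B z = 1.
Proof. intros H H'. apply (const_cv 1 (fun n => barBefore A B n z)); [|apply ubb_cv].
  intros n; destruct n; simpl; rewrite pif_F, pif_T; auto. Qed.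

Lemma ubb_harm A B z : ~ A z -> ~ B z -> ubb A B z = avg4 (ubb A B) z.
Proof.
  intros H H'. apply (UL_sequence (fun n => barBefore A B (S n) z)).
  - apply (cv_shift (fun n => barBefore A B n z)), ubb_cv.
  - eapply Un_cv_ext; [|apply (cv_avg4 (barBefore A B) (ubb A B) z), ubb_cv].
    intros n; simpl. rewrite pif_F, pif_F; auto.
Qed.

Lemma ProbBefore_eq z B A : ProbBefore z B A = avg4 (ubb A B) z.
Proof. unfold ProbBefore. apply Plim_cv. apply cv_avg4. apply ubb_cv. Qed.

Lemma ha_bounds A x n z : 0 <= hitAt A x n z <= 1.
Proof.
  revert z; induction n; intros z; simpl; unfold pif;
  destruct (excluded_middle_informative (A z)); try lra;
  destruct (excluded_middle_informative (z = x)); try lra.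
  split; [apply avg4_nonneg|apply avg4_le1]; intros w; apply IHn.
  split; [apply avg4_nonneg|apply avg4_le1]; intros w; apply IHn.
Qed.

Lemma ha_mono A x n z : hitAt A x n z <= hitAt A x (S n) z.
Proof.
  revert z; induction n; intros z.
  - change (hitAt A x 1 z) with (pif (A z) (pif (z = x) 1 0) (avg4 (hitAt A x 0) z)).
    change (hitAt A x 0 z) with (pif (A z) (pif (z = x) 1 0) 0).
    unfold pif;
    destruct (excluded_middle_informative (A z)); try lra.
    apply avg4_nonneg. intros; apply ha_bounds.
  - change (hitAt A x (S n) z) with (pif (A z) (pif (z = x) 1 0) (avg4 (hitAt A x n) z)).
    change (hitAt A x (S (S n)) z) with (pif (A z) (pif (z = x) 1 0) (avg4 (hitAt A x (S n)) z)).
    unfold pif;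
    destruct (excluded_middle_informative (A z)); try lra.
    apply avg4_mono. intros; apply IHn.
Qed.

Lemma hp_cv z A x : Un_cv (fun n => hitAt A x n z) (HitProb z A x).
Proof. apply (mono_cv _ 1). intros; apply ha_mono. intros; apply ha_bounds. Qed.

Lemma hp_nonneg z A x : 0 <= HitProb z A x.
Proof.
  pose proof (growing_ineq _ _ (fun n => ha_mono A x n z) (hp_cv z A x) 0).
  pose proof (ha_bounds A x 0 z). lra.
Qed.

Lemma hp_A z A x : A z -> HitProb z A x = pif (z = x) 1 0.
Proof. intros H. apply (const_cv _ (fun n => hitAt A x n z)); [|apply hp_cv].
  intros n; destruct n; simpl; apply pif_T; auto. Qed.

Lemma hp_harm z A x : ~ A z -> HitProb z A x = avg4 (fun w => HitProb w A x) z.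
Proof.
  intros H. apply (UL_sequence (fun n => hitAt A x (S n) z)).
  - apply (cv_shift (fun n => hitAt A x n z)), hp_cv.
  - eapply Un_cv_ext; [|apply (cv_avg4 (hitAt A x) (fun w => HitProb w A x) z); intros; apply hp_cv].
    intros n; simpl. rewrite pif_F; auto.
Qed.

Lemma list_max (l : list point) (f : point -> R) z0 : In z0 l ->
  exists z, In z l /\ forall w, In w l -> f w <= f z.
Proof.
  revert z0; induction l as [|a l IH]; intros z0 H; [destruct H|].
  destruct l as [|b l'].
  - exists a. split; [left; auto|]. intros w [<-|[]]; lra.
  - destruct (IH b (or_introl eq_refl)) as [z [Hz Hm]].
    destruct (Rle_dec (f a) (f z)).
    + exists z. split; [right; auto|]. intros w [<-|Hw]; auto.
    + exists a. split; [left; auto|]. intros w [<-|Hw]; [lra|]. specialize (Hm w Hw); lra.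
Qed.

Definition nb (z w : point) : Prop :=
  let '(a,b) := z in
  w = ((a+1)%Z,b) \/ w = ((a-1)%Z,b) \/ w = (a,(b+1)%Z) \/ w = (a,(b-1)%Z).

Lemma max_principle (Om : point -> Prop) (l : list point) (g v : point -> R) (Tb : R) :
  (forall z, Om z -> In z l) ->
  (forall z, Om z -> g z <= avg4 g z) ->
  (forall z, Om z -> v z = avg4 v z) ->
  (forall z w, Om z -> nb z w -> ~ Om w -> g w <= v w /\ IZR (snd w) ^ 2 <= Tb) ->
  forall z, Om z -> g z <= v z.
Proof.
  intros Hl Hg Hv Hb z Hz.
  assert (Heps : forall eps, eps > 0 -> g z - v z <= eps * Tb).
  { intros eps He.
    set (w := fun p => g p - v p + eps * IZR (snd p) ^ 2).
    set (lf := filter (fun p => if excluded_middle_informative (Om p) then true else false) l).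
    assert (Hin : forall p, In p lf <-> In p l /\ Om p).
    { intros p. unfold lf. rewrite filter_In.
      destruct (excluded_middle_informative (Om p)); intuition congruence. }
    destruct (list_max lf w z) as [zs [Hzs Hmax]]. { apply Hin; auto. }
    apply Hin in Hzs as [_ Hzs].
    assert (Hall : forall p, nb zs p -> w p <= Rmax (w zs) (eps * Tb)).
    { intros p Hp. destruct (classic (Om p)) as [Hp'|Hp'].
      - eapply Rle_trans; [apply Hmax, Hin; auto|apply Rmax_l].
      - destruct (Hb zs p Hzs Hp Hp') as [H1 H2]. eapply Rle_trans; [|apply Rmax_r].
        unfold w. nra. }
    assert (Havg : avg4 w zs >= w zs + eps / 2).
    { pose proof (Hg zs Hzs). pose proof (Hv zs Hzs).
      destruct zs as [a b]. unfold w; unfold avg4 in *. simpl in *.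
      rewrite ?plus_IZR, ?minus_IZR.
      lra. }
    assert (Havg2 : avg4 w zs <= Rmax (w zs) (eps * Tb)).
    { destruct zs as [a b]. unfold avg4.
      pose proof (Hall ((a+1)%Z,b) (or_introl eq_refl)).
      pose proof (Hall ((a-1)%Z,b) (or_intror (or_introl eq_refl))).
      pose proof (Hall (a,(b+1)%Z) (or_intror (or_intror (or_introl eq_refl)))).
      pose proof (Hall (a,(b-1)%Z) (or_intror (or_intror (or_intror eq_refl)))).
      lra. }
    assert (Hwz : w z <= w zs) by (apply Hmax, Hin; auto).
    unfold Rmax in Havg2. destruct (Rle_dec (w zs) (eps * Tb)).
    - assert (0 <= eps * IZR (snd z) ^ 2) by (apply Rmult_le_pos; [lra|apply pow2_ge_0]).
      unfold w in Hwz, r. simpl in Hwz, H, r. nra.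
    - lra. }
  destruct (Rle_dec (g z - v z) 0); [lra|].
  exfalso.
  assert (HT : 0 < Tb \/ Tb <= 0) by lra. destruct HT as [HT|HT].
  - specialize (Heps ((g z - v z) / (2 * Tb))).
    assert (0 < (g z - v z) / (2 * Tb)) by (apply Rdiv_lt_0_compat; lra).
    specialize (Heps ltac:(lra)).
    replace ((g z - v z) / (2 * Tb) * Tb) with ((g z - v z)/2) in Heps by (field; lra). lra.
  - specialize (Heps 1 ltac:(lra)). lra.
Qed.

Definition zr (a : Z) (n : nat) : list Z := map (fun i => (a + Z.of_nat i)%Z) (seq 0 n).

Lemma zr_in a n k : (a <= k < a + Z.of_nat n)%Z -> In k (zr a n).
Proof.
  intros H. unfold zr. apply in_map_iff. exists (Z.to_nat (k - a)). split; [lia|].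
  apply in_seq. lia.
Qed.

Definition box (X : Z) (y1 y2 : Z) : list point :=
  list_prod (zr (-X) (Z.to_nat (2*X+1))) (zr y1 (Z.to_nat (y2 - y1 + 1))).

Lemma box_in X y1 y2 x y : (Z.abs x <= X)%Z -> (y1 <= y <= y2)%Z -> In (x,y) (box X y1 y2).
Proof. intros H1 H2. unfold box. apply in_prod; apply zr_in; lia. Qed.

Lemma step (W : zset) (v : point -> R) (x0 y0 T X : Z) (Y c Q B1 : R) :
  (0 < y0)%Z -> (2*y0 <= T)%Z -> 0 < c -> 0 <= Q -> Y <= IZR y0 ->
  c * IZR y0 ^ 2 <= Y / 2 -> c * IZR (T - y0) ^ 2 <= Y ->
  (forall z, W z -> (0 <= snd z <= T)%Z -> Y/2 < IZR (snd z) ->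
      IZR T <= c * (IZR (fst z - x0) ^ 2 - IZR (T - y0) ^ 2)) ->
  (forall x, B1 < IZR (Z.abs x) -> IZR T <= c * (IZR (x - x0) ^ 2 - IZR (T-y0)^2)) ->
  (forall z, (0 <= snd z <= T)%Z -> (X < Z.abs (fst z))%Z -> W z) ->
  (forall x, W (x,0%Z)) ->
  (forall z, 0 <= v z) -> (forall z, W z -> v z = 0) ->
  (forall z, (0 < snd z < T)%Z -> ~ W z -> v z = avg4 v z) ->
  (forall x, ~ W (x,T) -> IZR (Z.abs x) <= B1 -> Q <= v (x,T)) ->
  ~ W (x0,y0) ->
  Q / IZR T * (IZR y0 - Y) <= v (x0,y0).
Proof.
  intros Hy0 HT Hc HQ HYy HcY1 HcY2 HW2 HB1 HX HL0 Hv0 HvW Hvh Htop Hz0.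
  assert (HTp : 0 < IZR T) by (apply IZR_lt; lia).
  assert (HY0 : 0 <= Y) by (pose proof (pow2_ge_0 (IZR y0)); nra).
  set (g := fun z : point => Q / IZR T * (IZR (snd z) - Y - c * (IZR (fst z - x0) ^ 2 - IZR (snd z - y0) ^ 2))).
  set (Om := fun z : point => (0 < snd z < T)%Z /\ ~ W z).
  assert (Hg0 : g (x0,y0) = Q / IZR T * (IZR y0 - Y)).
  { unfold g; simpl. replace (x0 - x0)%Z with 0%Z by lia. replace (y0 - y0)%Z with 0%Z by lia. simpl. ring. }
  rewrite <- Hg0.
  assert (HQT : 0 <= Q / IZR T) by (unfold Rdiv; apply Rmult_le_pos; [lra|left; apply Rinv_0_lt_compat; lra]).
  apply (max_principle Om (box X 1 (T-1)) g v (IZR T ^ 2)).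
  - intros [x y] [H1 H2]. apply box_in; [|simpl in *; lia].
    destruct (Z_le_gt_dec (Z.abs x) X); auto. exfalso; apply H2, HX; simpl in *; lia.
  - intros [a b] _. unfold g, avg4; simpl. rewrite ?minus_IZR, ?plus_IZR. right. field. lra.
  - intros z [H1 H2]. apply Hvh; auto.
  - intros [a b] [x y] [H1 H2] Hnb Hn. simpl in H1.
    assert (Hy : (0 <= y <= T)%Z).
    { unfold nb in Hnb. destruct Hnb as [E|[E|[E|E]]]; injection E; intros; subst; lia. }
    split.
    2:{ simpl. assert (0 <= IZR y <= IZR T) by (split; apply IZR_le; lia). nra. }
    destruct (classic (W (x,y))) as [HWw|HWw].
    + rewrite (HvW _ HWw). unfold g; simpl.
      cut (IZR y - Y - c * (IZR (x - x0) ^ 2 - IZR (y - y0) ^ 2) <= 0).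
      { intros. rewrite <- (Rmult_0_r (Q / IZR T)). apply Rmult_le_compat_l; auto. }
      assert (Hyr : 0 <= IZR y <= IZR T) by (split; apply IZR_le; lia).
      assert (Hxx : 0 <= IZR (x - x0) ^ 2) by apply pow2_ge_0.
      destruct (Rle_dec (IZR y) (Y/2)).
      * assert (IZR (y - y0) ^ 2 <= IZR y0 ^ 2).
        { rewrite minus_IZR. assert (IZR y <= IZR y0) by lra.
          assert (0 < IZR y0) by (apply IZR_lt; lia). nra. }
        nra.
      * specialize (HW2 (x,y) HWw Hy ltac:(simpl; lra)). simpl in HW2.
        assert (IZR (y - y0) ^ 2 <= IZR (T - y0) ^ 2).
        { rewrite !minus_IZR. assert (2 * IZR y0 <= IZR T) by (rewrite <- mult_IZR; apply IZR_le; lia).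
          assert (0 < IZR y0) by (apply IZR_lt; lia). nra. }
        nra.
    + assert (y = T).
      { destruct (Z.eq_dec y T); auto. destruct (Z.eq_dec y 0) as [->|].
        - exfalso; apply HWw, HL0.
        - exfalso; apply Hn; split; [simpl; lia|auto]. }
      subst y. unfold g; simpl.
      destruct (Rle_dec (IZR (Z.abs x)) B1).
      * eapply Rle_trans; [|apply Htop; auto].
        assert (IZR (x - x0) ^ 2 >= 0) by (apply Rle_ge, pow2_ge_0).
        assert (Hk : Q / IZR T * (IZR T - Y - c * (IZR (x - x0) ^ 2 - IZR (T - y0) ^ 2)) <= Q / IZR T * IZR T).
        { apply Rmult_le_compat_l; auto. nra. }
        replace (Q / IZR T * IZR T) with Q in Hk by (field; lra). lra.
      * eapply Rle_trans; [|apply Hv0].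
        specialize (HB1 x ltac:(lra)).
        rewrite <- (Rmult_0_r (Q / IZR T)). apply Rmult_le_compat_l; auto. lra.
  - split; [simpl; lia|auto].
Qed.

Lemma powR_nonneg x a : 0 <= powR x a.
Proof. unfold powR, pif. destruct (excluded_middle_informative (x = 0)); [lra|]. left; apply exp_pos. Qed.

Lemma ceil_nonneg x : 0 <= x -> (0 <= ceilR x)%Z.
Proof. intros H. unfold ceilR. destruct (base_Int_part (-x)) as [H1 _].
  assert (Int_part (-x) <= 0)%Z by (apply le_IZR; lra). lia. Qed.

Definition c0 (alpha : R) (h0 : Z) := ceilR (powR (IZR h0) alpha).

Lemma c0_nonneg alpha h0 : (0 <= c0 alpha h0)%Z.
Proof. apply ceil_nonneg, powR_nonneg. Qed.

Lemma W_L0 alpha h0 x : (0 <= h0)%Z -> What alpha h0 (x,0%Z).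
Proof.
  intros Hh. unfold What, setU, D0, Uh0, HH. fold (c0 alpha h0). simpl.
  destruct (Z_le_gt_dec (Z.abs x) (c0 alpha h0)).
  - left. split; lia.
  - right. split; [lia|]. split; [lia|]. apply powR_nonneg.
Qed.

Lemma W_high alpha h0 x y : 1 < alpha -> (0 <= h0)%Z -> What alpha h0 (x,y) -> (h0 < y)%Z ->
  Rpower (IZR y) alpha <= IZR (Z.abs x).
Proof.
  intros Ha Hh HW Hy. unfold What, setU, D0, Uh0 in HW. simpl in HW.
  destruct HW as [[_ H]|[_ [_ H]]]; [lia|].
  assert (Hyp : 0 < IZR y) by (apply IZR_lt; lia).
  unfold powR, pif in H. destruct (excluded_middle_informative (IZR (Z.abs x) = 0)) as [E|E]; [lra|].
  assert (Hx : 0 < IZR (Z.abs x)) by (assert (0 <= IZR (Z.abs x)) by (apply IZR_le; lia); lra).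
  replace (IZR (Z.abs x)) with (Rpower (Rpower (IZR (Z.abs x)) (/ alpha)) alpha).
  - apply Rle_Rpower_l; lra.
  - rewrite Rpower_mult. rewrite Rinv_l by lra. apply Rpower_1; auto.
Qed.

Lemma notW_axis alpha h0 y : 1 < alpha -> (0 <= h0)%Z -> (h0 < y)%Z -> ~ What alpha h0 (0%Z,y).
Proof.
  intros Ha Hh Hy HW. unfold What, setU, D0, Uh0 in HW. simpl in HW.
  destruct HW as [[_ H]|[_ [_ H]]]; [lia|].
  unfold powR in H. rewrite pif_T in H by reflexivity.
  assert (0 < IZR y) by (apply IZR_lt; lia). lra.
Qed.

Lemma W_far alpha h0 T : 1 < alpha -> (0 <= T)%Z -> exists X, forall z, (0 <= snd z <= T)%Z ->
  (X < Z.abs (fst z))%Z -> What alpha h0 z.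
Proof.
  intros Ha HT.
  exists (Z.max (c0 alpha h0) (Z.max 0 (up (Rpower (IZR T + 1) alpha)))).
  intros [x y] Hy Hx. simpl in *. right. unfold Uh0, HH. simpl. fold (c0 alpha h0).
  split; [lia|]. split; [lia|].
  assert (Hxp : 0 < IZR (Z.abs x)) by (apply IZR_lt; lia).
  unfold powR. rewrite pif_F by lra.
  destruct (archimed (Rpower (IZR T + 1) alpha)) as [Hu _].
  assert (Hl : Rpower (IZR T + 1) alpha <= IZR (Z.abs x)).
  { left. eapply Rlt_le_trans; [apply Hu|]. apply IZR_le; lia. }
  assert (HT1 : 0 < IZR T + 1) by (assert (0 <= IZR T) by (apply IZR_le; lia); lra).
  assert (Hl2 := Rle_Rpower_l _ _ (/ alpha) ltac:(left; apply Rinv_0_lt_compat; lra) (conj (exp_pos _ : 0 < Rpower (IZR T + 1) alpha) Hl)).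
  clear Hl; rename Hl2 into Hl.
  rewrite Rpower_mult, Rinv_r, Rpower_1 in Hl by lra.
  assert (IZR y <= IZR T) by (apply IZR_le; lia). lra.
Qed.

Definition ll := ln 2.
Definition ee (alpha : R) := (alpha - 1) / (2 * (alpha + 1)).
Definition Pj alpha (j : nat) := exp (INR j * ((1 + ee alpha) * ll)).
Definition Yj alpha (j : nat) := exp (INR j * ((1 - ee alpha) * ll)).
Definition rho alpha (j : nat) := exp (- (INR j * (ee alpha * ll))).
Definition lam alpha := exp (ee alpha * ll).
Definition kap alpha := lam alpha / (lam alpha - 1).
Definition y0j (j : nat) := (2 ^ Z.of_nat j)%Z.

Lemma ll_pos : 0 < ll.
Proof. unfold ll. pose proof ln_lt_2. lra. Qed.

Lemma ee_bounds alpha : 1 < alpha -> 0 < ee alpha < 1/2.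
Proof. intros H. unfold ee. split.
  - apply Rdiv_lt_0_compat; lra.
  - apply Rmult_lt_reg_r with (2 * (alpha + 1)); [lra|]. unfold Rdiv. rewrite Rmult_assoc, Rinv_l by lra. lra.
Qed.

Lemma y0j_exp j : IZR (y0j j) = exp (INR j * ll).
Proof. unfold y0j, ll. rewrite <- pow_IZR. rewrite <- ln_pow by lra. rewrite exp_ln; auto.
  apply pow_lt; lra. Qed.

Lemma y0j_pos j : (0 < y0j j)%Z.
Proof. apply lt_IZR. rewrite y0j_exp. apply exp_pos. Qed.

Lemma y0j_S j : y0j (S j) = (2 * y0j j)%Z.
Proof. unfold y0j. rewrite Nat2Z.inj_succ, Z.pow_succ_r; lia. Qed.

Lemma exp_le_mono a b : a <= b -> exp a <= exp b.
Proof. intros [H|H]; [left; apply exp_increasing; auto|subst; lra]. Qed.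

Lemma INR_nn j : 0 <= INR j.
Proof. apply pos_INR. Qed.

Lemma jel alpha j : 1 < alpha -> 0 <= INR j * (ee alpha * ll) /\ 0 <= INR j * ll.
Proof. intros Ha. pose proof (ee_bounds alpha Ha). pose proof ll_pos. pose proof (INR_nn j).
  split; apply Rmult_le_pos; try lra. apply Rmult_le_pos; lra. Qed.

Lemma y0_le_P alpha j : 1 < alpha -> IZR (y0j j) <= Pj alpha j.
Proof. intros Ha. rewrite y0j_exp. unfold Pj. apply exp_le_mono.
  pose proof (jel alpha j Ha). nra. Qed.

Lemma Y_le_y0 alpha j : 1 < alpha -> Yj alpha j <= IZR (y0j j).
Proof. intros Ha. rewrite y0j_exp. unfold Yj. apply exp_le_mono.
  pose proof (jel alpha j Ha). nra. Qed.

Lemma y0cube alpha j : 1 < alpha -> IZR (y0j j) ^ 3 <= Yj alpha j * Pj alpha j ^ 2.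
Proof. intros Ha. rewrite y0j_exp. unfold Yj, Pj.
  replace (exp (INR j * ll) ^ 3) with (exp (3 * (INR j * ll))).
  2:{ simpl. rewrite !Rmult_1_r, <- !exp_plus. f_equal. ring. }
  replace (exp (INR j * ((1 - ee alpha) * ll)) * exp (INR j * ((1 + ee alpha) * ll)) ^ 2)
    with (exp (INR j * ((1 - ee alpha) * ll) + 2 * (INR j * ((1 + ee alpha) * ll)))).
  2:{ simpl. rewrite !Rmult_1_r, <- !exp_plus. f_equal. ring. }
  apply exp_le_mono.
  pose proof (jel alpha j Ha). nra.
Qed.

Lemma Y_div_y0 alpha j : Yj alpha j = rho alpha j * IZR (y0j j).
Proof. rewrite y0j_exp. unfold Yj, rho. rewrite <- exp_plus. f_equal. ring. Qed.

Lemma P_S alpha j : 1 < alpha -> 2 * Pj alpha j <= Pj alpha (S j).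
Proof. intros Ha. unfold Pj. rewrite S_INR.
  replace ((INR j + 1) * ((1 + ee alpha) * ll)) with (INR j * ((1 + ee alpha) * ll) + (1 + ee alpha) * ll) by ring.
  rewrite exp_plus. rewrite Rmult_comm. apply Rmult_le_compat_l; [left; apply exp_pos|].
  replace 2 with (exp ll) by (unfold ll; apply exp_ln; lra). apply exp_le_mono.
  pose proof (ee_bounds alpha Ha). pose proof ll_pos. nra.
Qed.

Lemma rho_S alpha j : rho alpha (S j) * lam alpha = rho alpha j.
Proof. unfold rho, lam. rewrite S_INR, <- exp_plus. f_equal. ring. Qed.

Lemma lam_gt1 alpha : 1 < alpha -> 1 < lam alpha.
Proof. intros Ha. unfold lam. rewrite <- exp_0. apply exp_increasing.
  pose proof (ee_bounds alpha Ha). pose proof ll_pos. nra. Qed.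

Lemma kap_ge1 alpha : 1 < alpha -> 1 <= kap alpha.
Proof. intros Ha. pose proof (lam_gt1 alpha Ha). unfold kap.
  apply Rmult_le_reg_r with (lam alpha - 1); [lra|]. unfold Rdiv. rewrite Rmult_assoc, Rinv_l by lra. lra. Qed.

Lemma rho_pos alpha j : 0 < rho alpha j.
Proof. apply exp_pos. Qed.

Lemma rec_ineq alpha j : 1 < alpha ->
  1 - kap alpha * rho alpha j <= (1 - kap alpha * rho alpha (S j)) * (1 - rho alpha j).
Proof.
  intros Ha. pose proof (lam_gt1 alpha Ha) as Hl. pose proof (rho_S alpha j) as Hr.
  pose proof (rho_pos alpha (S j)). pose proof (kap_ge1 alpha Ha).
  set (r := rho alpha (S j)) in *. set (L := lam alpha) in *. rewrite <- Hr.
  unfold kap. fold L.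
  assert (E : L / (L - 1) * (r * L) = L / (L - 1) * r + r * L).
  { field. lra. }
  assert (0 <= L / (L - 1) * r * (r * L)).
  { apply Rmult_le_pos; [|nra]. apply Rmult_le_pos; [|lra]. unfold Rdiv. apply Rmult_le_pos; [lra|].
    left; apply Rinv_0_lt_compat; lra. }
  nra.
Qed.

Lemma key_alg (y0 Y P T D d : R) : 0 < y0 -> 0 < Y -> Y <= y0 -> y0 <= P -> y0 ^ 3 <= Y * P ^ 2 ->
  2 * y0 <= T <= 4 * y0 -> 7 * P <= D -> D <= Rabs d ->
  T <= Y / (9 * y0 ^ 2) * (d ^ 2 - (T - y0) ^ 2).
Proof.
  intros H1 H2 H3 H4 H5 H6 H7 H8.
  assert (Hd : 49 * P ^ 2 <= d ^ 2).
  { rewrite <- (pow2_abs d). assert (0 <= P) by lra. nra. }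
  assert (Hy2 : 0 < y0 ^ 2) by (apply pow_lt; lra).
  apply Rmult_le_reg_l with (9 * y0 ^ 2); [lra|].
  replace (9 * y0 ^ 2 * (Y / (9 * y0 ^ 2) * (d ^ 2 - (T - y0) ^ 2))) with (Y * (d ^ 2 - (T - y0) ^ 2)) by (field; lra).
  assert ((T - y0) ^ 2 <= 9 * y0 ^ 2) by nra.
  assert (9 * y0^2 <= 9 * P ^ 2) by nra.
  assert (Y * (d ^ 2 - (T - y0) ^ 2) >= Y * (40 * P ^ 2)) by nra.
  assert (9 * y0 ^ 2 * T <= 36 * y0 ^ 3) by nra.
  nra.
Qed.

Lemma Rdiv_le_0_compat a b : 0 <= a -> 0 < b -> 0 <= a / b.
Proof. intros. unfold Rdiv. apply Rmult_le_pos; [lra|left; apply Rinv_0_lt_compat; lra]. Qed.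

Lemma big_nat (M : R) : exists J0 : nat, forall j, (J0 <= j)%nat -> M <= INR j.
Proof.
  destruct (archimed M) as [H _].
  exists (Z.to_nat (up M)). intros j Hj.
  apply le_INR in Hj. rewrite INR_IZR_INZ in Hj.
  destruct (Z_le_gt_dec 0 (up M)).
  - rewrite Z2Nat.id in Hj by lia. lra.
  - assert (IZR (up M) < 0) by (apply IZR_lt; lia). pose proof (pos_INR j). lra.
Qed.

Lemma cond_a alpha : 1 < alpha -> exists J0, forall j, (J0 <= j)%nat ->
  15 * Pj alpha j <= Rpower (Yj alpha j / 2) alpha.
Proof.
  intros Ha. pose proof (ee_bounds alpha Ha) as He. pose proof ll_pos as Hl.
  assert (Hk : 0 < ll * (alpha - 1) / 2) by (apply Rdiv_lt_0_compat; nra).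
  destruct (big_nat ((ln 15 + alpha * ll) / (ll * (alpha - 1) / 2))) as [J0 HJ].
  exists J0. intros j Hj. specialize (HJ j Hj).
  replace (Yj alpha j / 2) with (exp (INR j * ((1 - ee alpha) * ll) - ll)).
  2:{ unfold Rminus. rewrite exp_plus, exp_Ropp. unfold Yj, ll. rewrite exp_ln by lra. reflexivity. }
  unfold Rpower, Pj. rewrite ln_exp.
  replace (15 * exp (INR j * ((1 + ee alpha) * ll))) with (exp (ln 15 + INR j * ((1 + ee alpha) * ll))).
  2:{ rewrite exp_plus, exp_ln; lra. }
  apply exp_le_mono. fold ll.
  assert (E : alpha * (INR j * ((1 - ee alpha) * ll) - ll) - (ln 15 + INR j * ((1 + ee alpha) * ll))
              = INR j * (ll * (alpha - 1) / 2) - (ln 15 + alpha * ll)).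
  { unfold ee. field. lra. }
  assert (INR j * (ll * (alpha - 1) / 2) >= ln 15 + alpha * ll).
  { apply Rle_ge. apply Rmult_le_compat_r with (r := ll * (alpha - 1) / 2) in HJ; [|lra].
    unfold Rdiv at 1 in HJ. rewrite Rmult_assoc, Rinv_l in HJ by lra. lra. }
  lra.
Qed.

Lemma cond_b alpha h0 : 1 < alpha -> exists J0, forall j, (J0 <= j)%nat ->
  IZR h0 <= Yj alpha j / 2.
Proof.
  intros Ha. pose proof (ee_bounds alpha Ha) as He. pose proof ll_pos as Hl.
  assert (Hk : 0 < (1 - ee alpha) * ll) by nra.
  destruct (big_nat (2 * IZR h0 / ((1 - ee alpha) * ll))) as [J0 HJ].
  exists J0. intros j Hj. specialize (HJ j Hj).
  unfold Yj. pose proof (exp_ineq1_le (INR j * ((1 - ee alpha) * ll))).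
  apply Rmult_le_compat_r with (r := (1 - ee alpha) * ll) in HJ; [|lra].
  unfold Rdiv at 1 in HJ. rewrite Rmult_assoc, Rinv_l in HJ by lra. lra.
Qed.

Lemma cond_d alpha : 1 < alpha -> exists J0, forall j, (J0 <= j)%nat ->
  kap alpha * rho alpha j <= 1/2.
Proof.
  intros Ha. pose proof (ee_bounds alpha Ha) as He. pose proof ll_pos as Hl.
  pose proof (kap_ge1 alpha Ha).
  assert (Hk : 0 < ee alpha * ll) by nra.
  destruct (big_nat (2 * kap alpha / (ee alpha * ll))) as [J0 HJ].
  exists J0. intros j Hj. specialize (HJ j Hj).
  unfold rho. rewrite exp_Ropp. pose proof (exp_ineq1_le (INR j * (ee alpha * ll))).
  apply Rmult_le_compat_r with (r := ee alpha * ll) in HJ; [|lra].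
  unfold Rdiv at 1 in HJ. rewrite Rmult_assoc, Rinv_l in HJ by lra.
  pose proof (exp_pos (INR j * (ee alpha * ll))).
  apply Rmult_le_reg_r with (exp (INR j * (ee alpha * ll))); [lra|].
  rewrite Rmult_assoc, Rinv_l by lra. lra.
Qed.

Lemma conds alpha h0 : 1 < alpha -> exists J0, forall j, (J0 <= j)%nat ->
  15 * Pj alpha j <= Rpower (Yj alpha j / 2) alpha /\ IZR h0 <= Yj alpha j / 2 /\
  kap alpha * rho alpha j <= 1/2.
Proof.
  intros Ha. destruct (cond_a alpha Ha) as [J1 H1]. destruct (cond_b alpha h0 Ha) as [J2 H2].
  destruct (cond_d alpha Ha) as [J3 H3]. exists (J1 + J2 + J3)%nat. intros j Hj.
  split; [apply H1; lia|split; [apply H2; lia|apply H3; lia]].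
Qed.

Lemma cond_a64 alpha : 1 < alpha -> exists J0, forall j, (J0 <= j)%nat ->
  64 * Pj alpha j <= Rpower (Yj alpha j / 2) alpha.
Proof.
  intros Ha. pose proof (ee_bounds alpha Ha) as He. pose proof ll_pos as Hl.
  assert (Hk : 0 < ll * (alpha - 1) / 2) by (apply Rdiv_lt_0_compat; nra).
  destruct (big_nat ((ln 64 + alpha * ll) / (ll * (alpha - 1) / 2))) as [J0 HJ].
  exists J0. intros j Hj. specialize (HJ j Hj).
  replace (Yj alpha j / 2) with (exp (INR j * ((1 - ee alpha) * ll) - ll)).
  2:{ unfold Rminus. rewrite exp_plus, exp_Ropp. unfold Yj, ll. rewrite exp_ln by lra. reflexivity. }
  unfold Rpower, Pj. rewrite ln_exp.
  replace (64 * exp (INR j * ((1 + ee alpha) * ll))) with (exp (ln 64 + INR j * ((1 + ee alpha) * ll))).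
  2:{ rewrite exp_plus, exp_ln; lra. }
  apply exp_le_mono. fold ll.
  assert (E : alpha * (INR j * ((1 - ee alpha) * ll) - ll) - (ln 64 + INR j * ((1 + ee alpha) * ll))
              = INR j * (ll * (alpha - 1) / 2) - (ln 64 + alpha * ll)).
  { unfold ee. field. lra. }
  assert (INR j * (ll * (alpha - 1) / 2) >= ln 64 + alpha * ll).
  { apply Rle_ge. apply Rmult_le_compat_r with (r := ll * (alpha - 1) / 2) in HJ; [|lra].
    unfold Rdiv at 1 in HJ. rewrite Rmult_assoc, Rinv_l in HJ by lra. lra. }
  lra.
Qed.

Lemma P_S_le alpha j : 1 < alpha -> Pj alpha (S j) <= 4 * Pj alpha j.
Proof. intros Ha. unfold Pj. rewrite S_INR.
  replace ((INR j + 1) * ((1 + ee alpha) * ll)) with (INR j * ((1 + ee alpha) * ll) + (1 + ee alpha) * ll) by ring.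
  rewrite exp_plus. rewrite (Rmult_comm 4). apply Rmult_le_compat_l; [left; apply exp_pos|].
  replace 4 with (exp (2 * ll)).
  2:{ replace (2 * ll) with (ll + ll) by ring. rewrite exp_plus. unfold ll. rewrite exp_ln; lra. }
  apply exp_le_mono.
  pose proof (ee_bounds alpha Ha). pose proof ll_pos. nra.
Qed.

Definition Qj alpha (N : Z) (j : nat) := IZR (y0j j) / IZR N * (1 - kap alpha * rho alpha j).

Lemma y0j_mono i j : (i <= j)%nat -> (y0j i <= y0j j)%Z.
Proof. intros H. unfold y0j. apply Z.pow_le_mono_r; lia. Qed.

Lemma step_inst alpha h0 (N T : Z) (j : nat) (v : point -> R) (Qt : R) x0 :
  1 < alpha -> (0 <= h0)%Z ->
  15 * Pj alpha j <= Rpower (Yj alpha j / 2) alpha -> IZR h0 <= Yj alpha j / 2 ->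
  (2 * y0j j <= T <= 4 * y0j j)%Z -> (T <= N)%Z -> 0 <= Qt ->
  (forall z, 0 <= v z) -> (forall z, What alpha h0 z -> v z = 0) ->
  (forall z, (0 < snd z < N)%Z -> ~ What alpha h0 z -> v z = avg4 v z) ->
  (forall x, ~ What alpha h0 (x,T) -> IZR (Z.abs x) <= 8 * Pj alpha (S j) -> Qt <= v (x,T)) ->
  IZR (Z.abs x0) <= 8 * Pj alpha j -> ~ What alpha h0 (x0, y0j j) ->
  Qt / IZR T * (IZR (y0j j) - Yj alpha j) <= v (x0, y0j j).
Proof.
  intros Ha Hh Hca Hcb HT HTN HQ Hv0 HvW Hvh Htop Hx0 Hz0.
  pose proof (y0j_pos j) as Hy0. assert (Hy0r : 0 < IZR (y0j j)) by (apply IZR_lt; lia).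
  assert (HYp : 0 < Yj alpha j) by apply exp_pos.
  pose proof (Y_le_y0 alpha j Ha) as HYy. pose proof (y0_le_P alpha j Ha) as HyP.
  pose proof (y0cube alpha j Ha) as Hcube. pose proof (P_S alpha j Ha) as HPS.
  assert (HTr : 2 * IZR (y0j j) <= IZR T <= 4 * IZR (y0j j)).
  { split; rewrite <- mult_IZR; apply IZR_le; lia. }
  destruct (W_far alpha h0 T Ha ltac:(lia)) as [X HX].
  set (c := Yj alpha j / (9 * IZR (y0j j) ^ 2)).
  assert (Hy2 : 0 < IZR (y0j j) ^ 2) by (apply pow_lt; lra).
  assert (Hd : forall x, 15 * Pj alpha j <= IZR (Z.abs x) ->
            IZR T <= c * (IZR (x - x0) ^ 2 - IZR (T - y0j j) ^ 2)).
  { intros x Hx. rewrite minus_IZR with (n := T).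
    apply (key_alg (IZR (y0j j)) (Yj alpha j) (Pj alpha j) (IZR T) (7 * Pj alpha j)); auto; try lra.
    rewrite <- abs_IZR. assert (Z.abs x <= Z.abs (x - x0) + Z.abs x0)%Z by lia.
    apply IZR_le in H. rewrite plus_IZR in H. lra. }
  apply (step (What alpha h0) v x0 (y0j j) T X (Yj alpha j) c Qt (8 * Pj alpha (S j))); auto; try lia.
  - unfold c. apply Rdiv_lt_0_compat; lra.
  - unfold c. replace (Yj alpha j / (9 * IZR (y0j j) ^ 2) * IZR (y0j j) ^ 2) with (Yj alpha j / 9) by (field; lra). lra.
  - unfold c. rewrite minus_IZR.
    apply Rmult_le_reg_l with (9 * IZR (y0j j) ^ 2); [lra|].
    replace (9 * IZR (y0j j) ^ 2 * (Yj alpha j / (9 * IZR (y0j j) ^ 2) * (IZR T - IZR (y0j j)) ^ 2))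
      with (Yj alpha j * (IZR T - IZR (y0j j)) ^ 2) by (field; lra).
    assert ((IZR T - IZR (y0j j)) ^ 2 <= 9 * IZR (y0j j) ^ 2) by nra. nra.
  - intros [x y] HW Hy HY. simpl in *. apply Hd.
    assert (Hhy : (h0 < y)%Z) by (apply lt_IZR; lra).
    pose proof (W_high alpha h0 x y Ha Hh HW Hhy).
    assert (Rpower (Yj alpha j / 2) alpha <= Rpower (IZR y) alpha).
    { apply Rle_Rpower_l; lra. }
    lra.
  - intros x Hx. apply Hd. lra.
  - intros x. apply W_L0; auto.
  - intros z Hz Hn. apply Hvh; auto. lia.
Qed.

Lemma chain alpha h0 (N : Z) (J J0 : nat) (v : point -> R) :
  1 < alpha -> (0 <= h0)%Z ->
  (forall j, (J0 <= j)%nat -> 15 * Pj alpha j <= Rpower (Yj alpha j / 2) alpha /\ IZR h0 <= Yj alpha j / 2 /\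
     kap alpha * rho alpha j <= 1/2) ->
  (2 * y0j J <= N < 4 * y0j J)%Z ->
  (forall z, 0 <= v z) -> (forall z, What alpha h0 z -> v z = 0) ->
  (forall z, (0 < snd z < N)%Z -> ~ What alpha h0 z -> v z = avg4 v z) ->
  (forall x, ~ What alpha h0 (x,N) -> IZR (Z.abs x) <= 8 * Pj alpha (S J) -> 1 <= v (x,N)) ->
  forall d j, (j + d = J)%nat -> (J0 <= j)%nat -> forall x0, IZR (Z.abs x0) <= 8 * Pj alpha j ->
  ~ What alpha h0 (x0, y0j j) -> Qj alpha N j <= v (x0, y0j j).
Proof.
  intros Ha Hh Hc HN Hv0 HvW Hvh Htop d.
  pose proof (kap_ge1 alpha Ha) as Hk.
  induction d as [|d IH]; intros j Hj HJ0 x0 Hx0 Hz0.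
  - rewrite Nat.add_0_r in Hj. subst j. destruct (Hc J HJ0) as [Ha' [Hb' Hd']].
    pose proof (y0j_pos J) as Hy0. assert (Hy0r : 0 < IZR (y0j J)) by (apply IZR_lt; lia).
    assert (HNp : 0 < IZR N) by (apply IZR_lt; lia).
    eapply Rle_trans; [|apply (step_inst alpha h0 N N J v 1 x0); auto; first [lia|lra]].
    unfold Qj. rewrite Y_div_y0. pose proof (rho_pos alpha J).
    replace (1 / IZR N * (IZR (y0j J) - rho alpha J * IZR (y0j J))) with
      (IZR (y0j J) / IZR N * (1 - rho alpha J)) by (field; lra).
    apply Rmult_le_compat_l; [apply Rdiv_le_0_compat; lra|]. nra.
  - destruct (Hc j HJ0) as [Ha' [Hb' Hd']]. destruct (Hc (S j) ltac:(lia)) as [_ [_ Hd2]].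
    pose proof (y0j_pos j) as Hy0. assert (Hy0r : 0 < IZR (y0j j)) by (apply IZR_lt; lia).
    assert (HNp : 0 < IZR N) by (apply IZR_lt; lia).
    assert (HQ : 0 <= Qj alpha N (S j)).
    { unfold Qj. apply Rmult_le_pos; [|lra]. apply Rdiv_le_0_compat; [|lra].
      apply IZR_le. pose proof (y0j_pos (S j)); lia. }
    pose proof (y0j_mono (S j) J ltac:(lia)).
    eapply Rle_trans; [|apply (step_inst alpha h0 N (y0j (S j)) j v (Qj alpha N (S j)) x0); auto].
    2:{ rewrite y0j_S; lia. }
    2:{ lia. }
    2:{ intros x Hn Hx. apply (IH (S j)); auto; lia. }
    unfold Qj. rewrite Y_div_y0. rewrite y0j_S, mult_IZR.
    pose proof (rec_ineq alpha j Ha).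
    replace (IZR 2 * IZR (y0j j) / IZR N * (1 - kap alpha * rho alpha (S j)) / (IZR 2 * IZR (y0j j)) *
             (IZR (y0j j) - rho alpha j * IZR (y0j j))) with
      (IZR (y0j j) / IZR N * ((1 - kap alpha * rho alpha (S j)) * (1 - rho alpha j))) by (field; lra).
    apply Rmult_le_compat_l; [apply Rdiv_le_0_compat; lra|]. lra.
Qed.

Definition Jof (N : Z) : nat := Z.to_nat (Z.log2 N - 1).

Lemma Jof_spec N : (2 <= N)%Z -> (2 * y0j (Jof N) <= N < 4 * y0j (Jof N))%Z.
Proof.
  intros H. unfold y0j, Jof. destruct (Z.log2_spec N ltac:(lia)) as [H1 H2].
  assert (1 <= Z.log2 N)%Z by (change 1%Z with (Z.log2 2); apply Z.log2_le_mono; lia).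
  rewrite Z2Nat.id by lia.
  replace (2 * 2 ^ (Z.log2 N - 1))%Z with (2 ^ Z.log2 N)%Z.
  2:{ rewrite <- Z.pow_succ_r by lia. f_equal; lia. }
  replace (4 * 2 ^ (Z.log2 N - 1))%Z with (2 ^ Z.succ (Z.log2 N))%Z.
  2:{ replace (Z.succ (Z.log2 N)) with (2 + (Z.log2 N - 1))%Z by lia. rewrite Z.pow_add_r by lia. reflexivity. }
  lia.
Qed.

Lemma walk_down alpha h0 (N : Z) (v : point -> R) :
  1 < alpha -> (0 <= h0)%Z ->
  (forall z, 0 <= v z) ->
  (forall z, (0 < snd z < N)%Z -> ~ What alpha h0 z -> v z = avg4 v z) ->
  forall m y, (h0 < y)%Z -> (y + Z.of_nat m < N)%Z -> (/4) ^ m * v (0%Z, (y + Z.of_nat m)%Z) <= v (0%Z, y).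
Proof.
  intros Ha Hh Hv0 Hvh m. induction m as [|m IH]; intros y Hy HyN.
  - simpl. replace (y + 0)%Z with y by lia. lra.
  - specialize (IH (y+1)%Z ltac:(lia) ltac:(lia)).
    replace (y + 1 + Z.of_nat m)%Z with (y + Z.of_nat (S m))%Z in IH by lia.
    rewrite (Hvh (0%Z,y)); [|simpl; lia|apply notW_axis; auto].
    unfold avg4.
    pose proof (Hv0 ((0+1)%Z, y)). pose proof (Hv0 ((0-1)%Z, y)). pose proof (Hv0 (0%Z, (y-1)%Z)).
    simpl pow. lra.
Qed.

Lemma lower alpha h0 : 1 < alpha -> (0 <= h0)%Z ->
  exists cst, 0 < cst /\ exists Nmin, (2 <= Nmin)%Z /\ forall N, (Nmin <= N)%Z -> forall v : point -> R,
  (forall z, 0 <= v z) -> (forall z, What alpha h0 z -> v z = 0) ->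
  (forall z, (0 < snd z < N)%Z -> ~ What alpha h0 z -> v z = avg4 v z) ->
  (forall x, ~ What alpha h0 (x,N) -> IZR (Z.abs x) <= 8 * Pj alpha (S (Jof N)) -> 1 <= v (x,N)) ->
  cst / IZR N <= v (0%Z, (h0 + 1)%Z).
Proof.
  intros Ha Hh. destruct (conds alpha h0 Ha) as [J0 HJ0].
  destruct (HJ0 J0 (le_n _)) as [_ [Hb Hd]].
  pose proof (Y_le_y0 alpha J0 Ha). pose proof (y0j_pos J0).
  assert (Hhy : (h0 < y0j J0)%Z).
  { assert (IZR h0 < IZR (y0j J0)); [|apply lt_IZR; auto].
    assert (0 < IZR (y0j J0)) by (apply IZR_lt; lia). lra. }
  set (m := Z.to_nat (y0j J0 - h0 - 1)).
  exists ((/4) ^ m * IZR (y0j J0) / 2). split.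
  { apply Rmult_lt_0_compat; [|lra]. apply Rmult_lt_0_compat; [apply pow_lt; lra|apply IZR_lt; lia]. }
  exists (y0j (S J0)). split; [rewrite y0j_S; lia|].
  intros N HN v Hv0 HvW Hvh Htop.
  assert (HN2 : (2 <= N)%Z) by (rewrite y0j_S in HN; lia).
  pose proof (Jof_spec N HN2) as HJ.
  assert (HJJ : (J0 <= Jof N)%nat).
  { destruct (le_lt_dec J0 (Jof N)); auto. exfalso.
    pose proof (y0j_mono (S (Jof N)) J0 ltac:(lia)) as Hm. rewrite y0j_S in Hm, HN. lia. }
  assert (HNp : 0 < IZR N) by (apply IZR_lt; lia).
  pose proof (chain alpha h0 N (Jof N) J0 v Ha Hh HJ0 HJ Hv0 HvW Hvh Htop (Jof N - J0) J0 ltac:(lia) (le_n _) 0%Z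
     ltac:(simpl; pose proof (exp_pos (INR J0 * ((1 + ee alpha) * ll))); unfold Pj; lra)
     (notW_axis alpha h0 _ Ha Hh Hhy)) as Hc.
  assert (Hw := walk_down alpha h0 N v Ha Hh Hv0 Hvh m (h0 + 1)%Z ltac:(lia)).
  replace (h0 + 1 + Z.of_nat m)%Z with (y0j J0) in Hw by (unfold m; lia).
  assert (y0j J0 < N)%Z by (pose proof (y0j_mono J0 (Jof N) HJJ); lia).
  specialize (Hw ltac:(lia)).
  unfold Qj in Hc.
  eapply Rle_trans; [|apply Hw].
  assert (Hpm : 0 < (/4) ^ m) by (apply pow_lt; lra).
  assert (IZR (y0j J0) / IZR N * (1/2) <= IZR (y0j J0) / IZR N * (1 - kap alpha * rho alpha J0)).
  { apply Rmult_le_compat_l; [apply Rdiv_le_0_compat; [apply IZR_le; lia|lra]|lra]. }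
  replace ((/ 4) ^ m * IZR (y0j J0) / 2 / IZR N) with ((/4) ^ m * (IZR (y0j J0) / IZR N * (1/2))) by (field; lra).
  apply Rmult_le_compat_l; lra.
Qed.

Definition rsum (a : Z) (n : nat) (f : Z -> R) : R := sum_f_R0 (fun i => f (a + Z.of_nat i)%Z) n.

Lemma rsum_ext a n f g : (forall x, (a <= x <= a + Z.of_nat n)%Z -> f x = g x) -> rsum a n f = rsum a n g.
Proof. intros H. unfold rsum. apply sum_eq. intros i Hi. apply H. lia. Qed.

Lemma rsum_plus a n f g : rsum a n (fun x => f x + g x) = rsum a n f + rsum a n g.
Proof. unfold rsum. apply plus_sum. Qed.

Lemma rsum_scal a n f c : rsum a n (fun x => c * f x) = c * rsum a n f.
Proof. unfold rsum. rewrite scal_sum. apply sum_eq. intros; ring. Qed.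

Lemma rsum_le a n f g : (forall x, (a <= x <= a + Z.of_nat n)%Z -> f x <= g x) -> rsum a n f <= rsum a n g.
Proof. intros H. unfold rsum. apply sum_Rle. intros i Hi. apply H. lia. Qed.

Lemma rsum_zero a n f : (forall x, (a <= x <= a + Z.of_nat n)%Z -> f x = 0) -> rsum a n f = 0.
Proof. intros H. rewrite (rsum_ext a n f (fun _ => 0)) by auto. unfold rsum. rewrite sum_cte. ring. Qed.

Lemma rsum_nonneg a n f : (forall x, (a <= x <= a + Z.of_nat n)%Z -> 0 <= f x) -> 0 <= rsum a n f.
Proof. intros H. rewrite <- (rsum_zero a n (fun _ => 0)) by auto. apply rsum_le. auto. Qed.

Lemma rsum_S a n f : rsum a (S n) f = rsum a n f + f (a + Z.of_nat (S n))%Z.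
Proof. unfold rsum. rewrite tech5. reflexivity. Qed.

Lemma rsum_shift_gen a n f : rsum a n (fun x => f (x + 1)%Z) = rsum a n f - f a + f (a + Z.of_nat n + 1)%Z.
Proof.
  induction n as [|n IH].
  - unfold rsum; simpl. replace (a + 0)%Z with a by lia. replace (a + 0 + 1)%Z with (a+1)%Z by lia. ring.
  - rewrite !rsum_S, IH. replace (a + Z.of_nat (S n) + 1)%Z with (a + Z.of_nat n + 1 + 1)%Z by lia.
    replace (a + Z.of_nat (S n))%Z with (a + Z.of_nat n + 1)%Z by lia. ring.
Qed.

Lemma rsum_shift a n f : f a = 0 -> f (a + Z.of_nat n + 1)%Z = 0 ->
  rsum a n (fun x => f (x + 1)%Z) = rsum a n f.
Proof. intros H1 H2. rewrite rsum_shift_gen, H1, H2. ring. Qed.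

Lemma rsum_term a n f x : (forall y, (a <= y <= a + Z.of_nat n)%Z -> 0 <= f y) ->
  (a <= x <= a + Z.of_nat n)%Z -> f x <= rsum a n f.
Proof.
  intros H Hx. induction n as [|n IH].
  - unfold rsum; simpl. replace x with (a + 0)%Z by lia. lra.
  - rewrite rsum_S. destruct (Z.eq_dec x (a + Z.of_nat (S n))%Z) as [->|Hne].
    + assert (0 <= rsum a n f) by (apply rsum_nonneg; intros; apply H; lia). lra.
    + assert (f x <= rsum a n f) by (apply IH; [intros; apply H; lia|lia]).
      assert (0 <= f (a + Z.of_nat (S n))%Z) by (apply H; lia). lra.
Qed.

Lemma rsum_point a n f x0 : (a <= x0 <= a + Z.of_nat n)%Z -> (forall x, x <> x0 -> f x = 0) ->
  rsum a n f = f x0.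
Proof.
  intros Hx H. induction n as [|n IH].
  - unfold rsum; simpl. f_equal; lia.
  - rewrite rsum_S. destruct (Z.eq_dec x0 (a + Z.of_nat (S n))%Z) as [E|Hne].
    + rewrite (rsum_zero a n f); [rewrite <- E; ring|]. intros x Hx'. apply H. lia.
    + rewrite IH by lia. rewrite (H (a + Z.of_nat (S n))%Z) by lia. ring.
Qed.

Lemma rsum_split a n m f : rsum a (n + S m) f = rsum a n f + rsum (a + Z.of_nat n + 1) m f.
Proof.
  induction m as [|m IH].
  - rewrite Nat.add_1_r, rsum_S. unfold rsum at 3; simpl. f_equal. f_equal. lia.
  - replace (n + S (S m))%nat with (S (n + S m)) by lia. rewrite rsum_S, IH, rsum_S.
    rewrite Rplus_assoc. f_equal. f_equal. f_equal. lia.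
Qed.

Definition boxsum (X Y : Z) (F : point -> R) : R :=
  rsum (-X) (Z.to_nat (2 * X)) (fun x => rsum 0 (Z.to_nat Y) (fun y => F (x,y))).

Lemma boxsum_plus X Y F G : boxsum X Y (fun z => F z + G z) = boxsum X Y F + boxsum X Y G.
Proof. unfold boxsum. rewrite <- rsum_plus. apply rsum_ext. intros. apply rsum_plus. Qed.

Lemma boxsum_le X Y F G : (forall z, F z <= G z) -> boxsum X Y F <= boxsum X Y G.
Proof. intros H. unfold boxsum. apply rsum_le. intros. apply rsum_le. auto. Qed.

Lemma boxsum_ext X Y F G : (forall z, F z = G z) -> boxsum X Y F = boxsum X Y G.
Proof. intros H. unfold boxsum. apply rsum_ext. intros. apply rsum_ext. auto. Qed.

Lemma boxsum_scal X Y F c : boxsum X Y (fun z => c * F z) = c * boxsum X Y F.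
Proof. unfold boxsum. rewrite <- rsum_scal. apply rsum_ext. intros. apply rsum_scal. Qed.

Lemma boxsum_opp X Y F : boxsum X Y (fun z => - F z) = - boxsum X Y F.
Proof. rewrite <- (Rmult_1_l (boxsum X Y F)), Ropp_mult_distr_l, <- boxsum_scal.
  apply boxsum_ext. intros; ring. Qed.

Lemma boxsum_shift_x X Y (F : point -> R) : (0 <= X)%Z ->
  (forall y, F ((-X)%Z, y) = 0) -> (forall y, F ((X + 1)%Z, y) = 0) ->
  boxsum X Y (fun z => F ((fst z + 1)%Z, snd z)) = boxsum X Y F.
Proof.
  intros HX H1 H2. unfold boxsum. simpl.
  apply (rsum_shift (-X) (Z.to_nat (2*X)) (fun x => rsum 0 (Z.to_nat Y) (fun y => F (x,y)))).
  - apply rsum_zero. intros; apply H1.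
  - apply rsum_zero. intros. replace (- X + Z.of_nat (Z.to_nat (2 * X)) + 1)%Z with (X+1)%Z by lia. apply H2.
Qed.

Lemma boxsum_shift_y X Y (F : point -> R) : (0 <= Y)%Z ->
  (forall x, F (x, 0%Z) = 0) -> (forall x, F (x, (Y + 1)%Z) = 0) ->
  boxsum X Y (fun z => F (fst z, (snd z + 1)%Z)) = boxsum X Y F.
Proof.
  intros HY H1 H2. unfold boxsum. simpl. apply rsum_ext. intros x _.
  apply (rsum_shift 0 (Z.to_nat Y) (fun y => F (x,y))).
  - apply H1.
  - replace (0 + Z.of_nat (Z.to_nat Y) + 1)%Z with (Y+1)%Z by lia. apply H2.
Qed.

Definition nbsum (z : point) (G : point -> R) : R :=
  let '(a,b) := z in G ((a+1)%Z,b) + G ((a-1)%Z,b) + G (a,(b+1)%Z) + G (a,(b-1)%Z).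

Lemma green (Om : point -> Prop) (X Y : Z) (phi h : point -> R) :
  (0 <= X)%Z -> (0 <= Y)%Z ->
  (forall z, Om z -> (Z.abs (fst z) < X)%Z /\ (0 < snd z < Y)%Z) ->
  (forall z, Om z -> h z = avg4 h z) ->
  boxsum X Y (fun z => pif (Om z) (nbsum z (fun w => pif (Om w) 0 (phi z * h w - h z * phi w))) 0)
  = boxsum X Y (fun z => pif (Om z) (4 * (h z * (phi z - avg4 phi z))) 0).
Proof.
  intros HX HY HOm Hh.
  set (A := fun z w => pif (Om z) (pif (Om w) (phi z * h w - h z * phi w) 0) 0).
  assert (Hanti : forall z w, A w z = - A z w).
  { intros z w. unfold A, pif.
    destruct (excluded_middle_informative (Om z)); destruct (excluded_middle_informative (Om w)); ring. }
  assert (Hout : forall z w, ~ Om z -> A z w = 0).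
  { intros z w H. unfold A. rewrite pif_F; auto. }
  assert (Hout2 : forall z w, ~ Om w -> A z w = 0).
  { intros z w H. unfold A, pif. destruct (excluded_middle_informative (Om z)); auto.
    destruct (excluded_middle_informative (Om w)); tauto. }
  assert (Hpt : forall z, pif (Om z) (4 * (h z * (phi z - avg4 phi z))) 0 =
     pif (Om z) (nbsum z (fun w => pif (Om w) 0 (phi z * h w - h z * phi w))) 0 +
     (A z ((fst z + 1)%Z, snd z) + A z ((fst z - 1)%Z, snd z) + A z (fst z, (snd z + 1)%Z) + A z (fst z, (snd z - 1)%Z))).
  { intros [a b]. simpl. unfold A. destruct (classic (Om (a,b))) as [Ho|Ho].
    - rewrite !(pif_T (Om (a,b))) by auto. pose proof (Hh _ Ho) as E. unfold avg4 in *. unfold nbsum.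
      unfold pif.
      destruct (excluded_middle_informative (Om ((a + 1)%Z, b)));
      destruct (excluded_middle_informative (Om ((a - 1)%Z, b)));
      destruct (excluded_middle_informative (Om (a, (b + 1)%Z)));
      destruct (excluded_middle_informative (Om (a, (b - 1)%Z))); rewrite E; field.
    - rewrite !(pif_F (Om (a,b))) by auto. ring. }
  rewrite (boxsum_ext _ _ _ _ Hpt).
  rewrite boxsum_plus.
  cut (boxsum X Y (fun z => A z ((fst z + 1)%Z, snd z) + A z ((fst z - 1)%Z, snd z) + A z (fst z, (snd z + 1)%Z) +
                               A z (fst z, (snd z - 1)%Z)) = 0).
  { intros ->. ring. }
  rewrite !boxsum_plus.
  assert (Ex : boxsum X Y (fun z => A z ((fst z - 1)%Z, snd z)) = - boxsum X Y (fun z => A z ((fst z + 1)%Z, snd z))).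
  { rewrite <- (boxsum_shift_x X Y (fun z => A z ((fst z - 1)%Z, snd z))); auto.
    - rewrite <- boxsum_opp.
      apply boxsum_ext. intros [a b]. simpl. replace (a + 1 - 1)%Z with a by lia. rewrite Hanti. ring.
    - intros y. apply Hout. intros Ho. apply HOm in Ho. simpl in Ho. lia.
    - intros y. apply Hout. intros Ho. apply HOm in Ho. simpl in Ho. lia. }
  assert (Ey : boxsum X Y (fun z => A z (fst z, (snd z - 1)%Z)) = - boxsum X Y (fun z => A z (fst z, (snd z + 1)%Z))).
  { rewrite <- (boxsum_shift_y X Y (fun z => A z (fst z, (snd z - 1)%Z))); auto.
    - rewrite <- boxsum_opp.
      apply boxsum_ext. intros [a b]. simpl. replace (b + 1 - 1)%Z with b by lia. rewrite Hanti. ring.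
    - intros x. apply Hout. intros Ho. apply HOm in Ho. simpl in Ho. lia.
    - intros x. apply Hout. intros Ho. apply HOm in Ho. simpl in Ho. lia. }
  rewrite Ex, Ey. ring.
Qed.

Lemma p2params alpha h0 : 1 < alpha -> (0 <= h0)%Z ->
  exists N1, (2 <= N1)%Z /\ forall N, (N1 <= N)%Z ->
  IZR N <= 8 * Pj alpha (S (Jof N)) /\ 2 * (8 * Pj alpha (S (Jof N))) <= Rpower (IZR N / 2) alpha /\
  IZR h0 < IZR N / 2.
Proof.
  intros Ha Hh. destruct (cond_a64 alpha Ha) as [J1 H1]. destruct (conds alpha h0 Ha) as [J2 H2].
  set (J0 := (J1 + J2)%nat).
  exists (y0j (S J0)). split; [rewrite y0j_S; pose proof (y0j_pos J0); lia|].
  intros N HN.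
  assert (HN2 : (2 <= N)%Z) by (rewrite y0j_S in HN; pose proof (y0j_pos J0); lia).
  pose proof (Jof_spec N HN2) as HJ.
  set (J := Jof N) in *.
  assert (HJJ : (J0 <= J)%nat).
  { destruct (le_lt_dec J0 J); auto. exfalso.
    pose proof (y0j_mono (S J) J0 ltac:(lia)) as Hm. rewrite y0j_S in Hm, HN. lia. }
  specialize (H1 J ltac:(unfold J0 in *; lia)). destruct (H2 J ltac:(unfold J0 in *; lia)) as [_ [Hb _]].
  pose proof (y0_le_P alpha (S J) Ha). rewrite y0j_S, mult_IZR in H.
  pose proof (P_S_le alpha J Ha). pose proof (Y_le_y0 alpha J Ha).
  pose proof (y0j_pos J). assert (Hy : 0 < IZR (y0j J)) by (apply IZR_lt; lia).
  assert (HNr : 2 * IZR (y0j J) <= IZR N < 4 * IZR (y0j J)).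
  { split; [rewrite <- mult_IZR; apply IZR_le; lia|rewrite <- mult_IZR; apply IZR_lt; lia]. }
  assert (HYp : 0 < Yj alpha J) by apply exp_pos.
  split; [lra|split; [|lra]].
  assert (Rpower (Yj alpha J / 2) alpha <= Rpower (IZR N / 2) alpha) by (apply Rle_Rpower_l; lra).
  lra.
Qed.

Definition Ftop (N : Z) (B : R) (z : point) : R :=
  2 * (IZR N / 4 - Rabs (IZR (snd z - N)) - IZR N / (8 * B ^ 2) * (IZR (fst z) ^ 2 - IZR (snd z - N) ^ 2)).

Lemma abs_int_lemma (t : Z) : (Rabs (IZR t + 1) + Rabs (IZR t - 1) - 2 * Rabs (IZR t)) = pif (t = 0%Z) 2 0.
Proof.
  destruct (Z.eq_dec t 0) as [->|Hn].
  - rewrite pif_T by auto. simpl. rewrite Rplus_0_l, Rminus_0_l, Rabs_R0, Rabs_Ropp, Rabs_R1. ring.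
  - rewrite pif_F by auto. destruct (Z_lt_le_dec 0 t).
    + assert (1 <= IZR t) by (apply IZR_le; lia).
      rewrite !Rabs_right by lra. ring.
    + assert (IZR t <= -1) by (apply IZR_le; lia).
      rewrite !Rabs_left1 by lra. ring.
Qed.

Lemma Ftop_sub N B z : 0 < B -> Ftop N B z <= avg4 (Ftop N B) z + pif (snd z = N) 1 0.
Proof.
  intros HB. destruct z as [a b]. unfold avg4, Ftop. simpl.
  rewrite ?minus_IZR, ?plus_IZR.
  pose proof (abs_int_lemma (b - N)) as E. rewrite minus_IZR in E.
  replace (IZR b + 1 - IZR N) with (IZR b - IZR N + 1) by ring.
  replace (IZR b - 1 - IZR N) with (IZR b - IZR N - 1) by ring.
  assert (E2 : pif (b - N = 0)%Z 2 0 = 2 * pif (b = N) 1 0).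
  { unfold pif. destruct (excluded_middle_informative (b - N = 0)%Z);
    destruct (excluded_middle_informative (b = N)); try lia; lra. }
  rewrite E2 in E.
  set (t := IZR b - IZR N) in *. set (k := IZR N / (8 * B ^ 2)). set (x := IZR a).
  set (r0 := Rabs t) in *. set (r1 := Rabs (t + 1)) in *. set (r2 := Rabs (t - 1)) in *.
  set (ind := pif (b = N) 1 0) in *.
  match goal with |- ?L <= ?R + _ => assert (Hd : R - L = - (r1 + r2 - 2 * r0) / 2) by (unfold r0, r1, r2; field; lra) end.
  lra.
Qed.

Lemma Ftop_neg alpha h0 N B x y : 1 < alpha -> (0 <= h0)%Z -> 0 < IZR N -> IZR N <= B ->
  2 * B <= Rpower (IZR N / 2) alpha -> IZR h0 < IZR N / 2 -> (0 <= y <= 2 * N)%Z ->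
  (What alpha h0 (x,y) \/ y = (2 * N)%Z) -> Ftop N B (x,y) <= 0.
Proof.
  intros Ha Hh Hn HnB HB2 Hh2 Hy HW. unfold Ftop; cbn [fst snd].
  set (n := IZR N) in *. assert (HB : 0 < B) by lra.
  set (k := n / (8 * B ^ 2)).
  assert (Hk : 0 < k) by (unfold k; apply Rdiv_lt_0_compat; [lra|]; nra).
  assert (HkB : k * B ^ 2 = n / 8) by (unfold k; field; lra).
  assert (Hkn : k * n <= 1/8).
  { assert (k * n <= k * B) by (apply Rmult_le_compat_l; lra).
    assert (k * B = n / (8 * B)) by (unfold k; field; lra).
    assert (n / (8 * B) <= 1/8).
    { apply Rmult_le_reg_r with (8 * B); [lra|]. unfold Rdiv. rewrite Rmult_assoc, Rinv_l by lra. lra. }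
    lra. }
  assert (Ht : IZR (y - N) = IZR y - n) by (rewrite minus_IZR; auto).
  rewrite Ht. set (t := IZR y - n).
  assert (Hyr : 0 <= IZR y <= 2 * n) by (split; [apply IZR_le; lia|unfold n; rewrite <- mult_IZR; apply IZR_le; lia]).
  assert (Hta : Rabs t <= n) by (apply Rabs_le; unfold t; lra).
  assert (Ht2 : t ^ 2 = Rabs t ^ 2) by (rewrite pow2_abs; auto).
  assert (Hx2 : 0 <= IZR x ^ 2) by apply pow2_ge_0.
  assert (Hat : 0 <= Rabs t) by apply Rabs_pos.
  destruct (Rle_dec (n / 2) (Rabs t)) as [Hc|Hc].
  - assert (k * t ^ 2 <= Rabs t / 8).
    { rewrite Ht2. assert (k * Rabs t ^ 2 <= k * n * Rabs t).
      { simpl. rewrite Rmult_1_r. rewrite Rmult_assoc. apply Rmult_le_compat_l; [lra|].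
        apply Rmult_le_compat_r; lra. }
      assert (k * n * Rabs t <= 1/8 * Rabs t) by (apply Rmult_le_compat_r; lra). lra. }
    assert (k * IZR x ^ 2 >= 0) by nra. assert (Hexp : k * (IZR x ^ 2 - t ^ 2) = k * IZR x ^ 2 - k * t ^ 2) by ring. rewrite Hexp. lra.
  - assert (Hty : n / 2 < IZR y) by (unfold t in Hc; destruct (Rcase_abs (IZR y - n)) as [Hl|Hl];
      [rewrite Rabs_left in Hc by lra|rewrite Rabs_right in Hc by lra]; lra).
    destruct HW as [HW|HW].
    2:{ exfalso. subst y. unfold t in Hc. rewrite mult_IZR in Hc. fold n in Hc.
        rewrite Rabs_right in Hc by lra. lra. }
    assert (Hhy : (h0 < y)%Z) by (apply lt_IZR; lra).
    pose proof (W_high alpha h0 x y Ha Hh HW Hhy) as Hx.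
    assert (Rpower (n / 2) alpha <= Rpower (IZR y) alpha) by (apply Rle_Rpower_l; lra).
    assert (Hxx : 2 * B <= Rabs (IZR x)) by (rewrite <- abs_IZR; lra).
    assert (4 * B ^ 2 <= IZR x ^ 2) by (rewrite <- (pow2_abs (IZR x)); nra).
    assert (k * IZR x ^ 2 >= n / 2) by nra.
    assert (k * t ^ 2 <= n / 32).
    { rewrite Ht2. assert (Rabs t ^ 2 <= n ^ 2 / 4) by nra.
      assert (k * Rabs t ^ 2 <= k * (n ^ 2 / 4)) by (apply Rmult_le_compat_l; lra).
      assert (k * (n ^ 2 / 4) = k * n * n / 4) by field. nra. }
    lra.
Qed.

Lemma Ftop_top N B x : 0 < IZR N -> 0 < B -> IZR (Z.abs x) <= B -> IZR N / 4 <= Ftop N B (x, N).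
Proof.
  intros Hn HB Hx. unfold Ftop; cbn [fst snd]. replace (N - N)%Z with 0%Z by lia.
  replace (IZR 0) with 0 by reflexivity. replace (0 ^ 2) with 0 by ring.
  rewrite Rabs_R0.
  assert (IZR x ^ 2 <= B ^ 2).
  { rewrite <- (pow2_abs (IZR x)), <- abs_IZR. assert (0 <= IZR (Z.abs x)) by (apply IZR_le; lia). nra. }
  assert (IZR N / (8 * B ^ 2) * IZR x ^ 2 <= IZR N / (8 * B ^ 2) * B ^ 2).
  { apply Rmult_le_compat_l; auto. left; apply Rdiv_lt_0_compat; [lra|]. nra. }
  replace (IZR N / (8 * B ^ 2) * B ^ 2) with (IZR N / 8) in H0 by (field; lra).
  lra.
Qed.

Lemma part1 alpha h0 : 1 < alpha -> (0 <= h0)%Z ->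
  exists c : R, 0 < c /\
    (exists K : nat, forall k : nat, (K <= k)%nat ->
        ProbBefore (0%Z, h0) (Lline (2 ^ Z.of_nat k)%Z) (What alpha h0) >= c * / 2 ^ k).
Proof.
  intros Ha Hh. destruct (lower alpha h0 Ha Hh) as [cst [Hc [Nmin [HNmin Hlow]]]].
  exists (cst / 4). split; [lra|].
  exists (Z.to_nat Nmin). intros k Hk.
  set (N := (2 ^ Z.of_nat k)%Z).
  assert (HN : (Nmin <= N)%Z).
  { unfold N. pose proof (Z.pow_gt_lin_r 2 (Z.of_nat k) ltac:(lia) ltac:(lia)). lia. }
  set (W := What alpha h0).
  set (v := ubb W (Lline N)).
  assert (Hv := Hlow N HN v (ubb_nonneg _ _) (fun z H => ubb_A _ _ z H)).
  assert (Hpos : (0 < N)%Z) by lia.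
  specialize (Hv ltac:(intros z Hz Hn; apply ubb_harm; auto; unfold Lline; lia)).
  specialize (Hv ltac:(intros x Hn _; unfold v; rewrite ubb_B; [lra|auto|reflexivity])).
  rewrite ProbBefore_eq. fold W. fold v. unfold avg4.
  pose proof (ubb_nonneg W (Lline N) ((0+1)%Z, h0)). pose proof (ubb_nonneg W (Lline N) ((0-1)%Z, h0)).
  pose proof (ubb_nonneg W (Lline N) (0%Z, (h0-1)%Z)).
  fold v in H, H0, H1.
  assert (E : 2 ^ k = IZR N) by (unfold N; rewrite <- pow_IZR; reflexivity).
  rewrite E. assert (0 < IZR N) by (apply IZR_lt; lia).
  replace (cst / 4 * / IZR N) with (/4 * (cst / IZR N)) by (field; lra).
  apply Rle_ge. lra.
Qed.

Lemma boxsum_term X Y F x y : (0 <= X)%Z -> (forall z, 0 <= F z) -> (Z.abs x <= X)%Z -> (0 <= y <= Y)%Z ->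
  F (x,y) <= boxsum X Y F.
Proof.
  intros HX HF Hx Hy. unfold boxsum.
  apply Rle_trans with (rsum 0 (Z.to_nat Y) (fun y0 => F (x, y0))).
  - apply (rsum_term 0 (Z.to_nat Y) (fun y0 => F (x,y0))); [intros; apply HF|lia].
  - apply (rsum_term (-X) (Z.to_nat (2*X)) (fun x0 => rsum 0 (Z.to_nat Y) (fun y0 => F (x0, y0)))).
    + intros. apply rsum_nonneg. intros; apply HF.
    + lia.
Qed.

Lemma rsum_Sl a m f : rsum a (S m) f = f a + rsum (a + 1) m f.
Proof. pose proof (rsum_split a 0 m f) as E. simpl in E. rewrite E. unfold rsum at 1. simpl.
  replace (a + 0)%Z with a by lia. replace (a + 0 + 1)%Z with (a + 1)%Z by lia. reflexivity. Qed.

Definition psum (g : Z -> R) (M : nat) := sum_f_R0 (fun i => g (Z.of_nat i - Z.of_nat M)%Z) (2 * M).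

Lemma psum_rsum g M : psum g M = rsum (- Z.of_nat M) (2 * M) g.
Proof. unfold psum, rsum. apply sum_eq. intros i _. f_equal. lia. Qed.

Lemma psum_S g M : psum g (S M) = g (- Z.of_nat (S M))%Z + psum g M + g (Z.of_nat (S M)).
Proof.
  rewrite !psum_rsum. replace (2 * S M)%nat with (S (S (2 * M))) by lia.
  rewrite rsum_S, rsum_Sl. replace (- Z.of_nat (S M) + 1)%Z with (- Z.of_nat M)%Z by lia.
  f_equal. f_equal. lia.
Qed.

Lemma psum_const g X : (forall x, (X < Z.abs x)%Z -> g x = 0) -> (0 <= X)%Z ->
  forall r, psum g (Z.to_nat X + r) = psum g (Z.to_nat X).
Proof.
  intros Hg HX r. induction r as [|r IH].
  - rewrite Nat.add_0_r. reflexivity.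
  - replace (Z.to_nat X + S r)%nat with (S (Z.to_nat X + r)) by lia. rewrite psum_S, IH.
    rewrite !Hg by lia. ring.
Qed.

Lemma psum_lim g X : (forall x, (X < Z.abs x)%Z -> g x = 0) -> (0 <= X)%Z ->
  Plim (psum g) = rsum (- X) (Z.to_nat (2 * X)) g.
Proof.
  intros Hg HX. rewrite (Plim_cv _ (psum g (Z.to_nat X))).
  - rewrite psum_rsum. replace (- Z.of_nat (Z.to_nat X))%Z with (- X)%Z by lia.
    replace (2 * Z.to_nat X)%nat with (Z.to_nat (2 * X)) by lia. reflexivity.
  - intros e He. exists (Z.to_nat X). intros n Hn.
    replace n with (Z.to_nat X + (n - Z.to_nat X))%nat by lia. rewrite psum_const by auto.
    unfold R_dist. rewrite Rminus_diag, Rabs_R0. lra.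
Qed.

Lemma part2 alpha h0 : 1 < alpha -> (0 <= h0)%Z ->
  exists c : R, 0 < c /\ exists N0 : Z, forall N : Z, (N0 <= N)%Z ->
        Hbar (What alpha h0) N (0%Z, h0) >= c.
Proof.
  intros Ha Hh. destruct (lower alpha h0 Ha Hh) as [cst [Hc [Nmin [HNmin Hlow]]]].
  destruct (p2params alpha h0 Ha Hh) as [N1 [HN1 Hp]].
  exists (cst / 16). split; [lra|]. exists (Z.max Nmin N1). intros N HN.
  destruct (Hp N ltac:(lia)) as [HnB [HB2 Hh2]].
  set (B := 8 * Pj alpha (S (Jof N))) in *.
  set (W := What alpha h0).
  assert (HNp : (0 < N)%Z) by lia. assert (Hn : 0 < IZR N) by (apply IZR_lt; lia).
  assert (HB : 0 < B) by lra.
  assert (HhN : (2 * h0 < N)%Z) by (apply lt_IZR; rewrite mult_IZR; lra).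
  set (Ac := setU W (fun w => snd w = N /\ B < IZR (Z.abs (fst w)))).
  set (Bc := fun w : point => snd w = N /\ IZR (Z.abs (fst w)) <= B).
  set (u := ubb Ac Bc).
  assert (Hu0 : forall z, 0 <= u z) by (intros; apply ubb_nonneg).
  assert (HuW : forall z, W z -> u z = 0) by (intros z Hz; apply ubb_A; left; auto).
  assert (Huh : forall z, (0 < snd z < N)%Z -> ~ W z -> u z = avg4 u z).
  { intros z Hz Hn'. apply ubb_harm.
    - intros [H|[H _]]; [tauto|lia].
    - intros [H _]; lia. }
  assert (Hutop : forall x, ~ W (x,N) -> IZR (Z.abs x) <= B -> u (x,N) = 1).
  { intros x Hn' Hx. apply ubb_B.
    - intros [H|[_ H]]; [tauto|simpl in H; lra].
    - split; auto. }
  assert (Hutop0 : forall x, B < IZR (Z.abs x) -> u (x,N) = 0).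
  { intros x Hx. apply ubb_A. right. split; auto. }
  assert (Hlu : cst / IZR N <= u (0%Z, (h0 + 1)%Z)).
  { apply (Hlow N ltac:(lia) u Hu0 HuW Huh). intros x H1 H2. rewrite (Hutop x H1 H2). lra. }
  set (Fb := fun z : point => pif (snd z <= N)%Z (IZR N / 4 * u z) 0).
  set (phi := fun z => Rmax 0 (Rmax (Ftop N B z) (Fb z))).
  set (h := fun z => HitProb z (setU W (Lline 0)) (0%Z, h0)).
  set (Om := fun z : point => (0 < snd z < 2 * N)%Z /\ ~ W z).
  destruct (W_far alpha h0 (2 * N) Ha ltac:(lia)) as [X HX].
  assert (HX0 : (0 <= X)%Z).
  { destruct (Z_le_gt_dec 0 X); auto. exfalso.
    assert (Hw : W (0%Z, (h0 + 1)%Z)) by (apply HX; cbn [fst snd]; lia). 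
    apply (notW_axis alpha h0 (h0+1) Ha Hh ltac:(lia)); exact Hw. }
  assert (HOm : forall z, Om z -> (Z.abs (fst z) < X + 1)%Z /\ (0 < snd z < 2 * N)%Z).
  { intros z [H1 H2]. split; auto. destruct (Z_le_gt_dec (Z.abs (fst z)) X); [lia|].
    exfalso. apply H2, HX; lia. }
  assert (Hh0 : forall z, 0 <= h z) by (intros; apply hp_nonneg).
  assert (Hhh : forall z, Om z -> h z = avg4 h z).
  { intros z [H1 H2]. apply hp_harm. intros [H|H]; [tauto|unfold Lline in H; lia]. }
  assert (Hhx : h (0%Z, h0) = 1).
  { unfold h. rewrite hp_A. - apply pif_T; auto. - left. left. unfold D0. cbn [fst snd].
      pose proof (c0_nonneg alpha h0); unfold c0 in *; lia. }
  assert (Hphi0 : forall z, 0 <= phi z) by (intros; apply Rmax_l).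
  assert (Hbd : forall z, (0 <= snd z <= 2 * N)%Z -> ~ Om z -> phi z = 0).
  { intros [x y] Hy Hno. cbn [fst snd] in Hy.
    assert (Hc2 : W (x,y) \/ y = (2 * N)%Z).
    { destruct (classic (W (x,y))); [left; auto|right].
      destruct (Z.eq_dec y 0) as [->|]; [exfalso; apply H, W_L0; auto|].
      destruct (Z.eq_dec y (2*N)); auto. exfalso. apply Hno. split; [cbn [fst snd]; lia|auto]. }
    assert (Ft : Ftop N B (x,y) <= 0) by (apply (Ftop_neg alpha h0); auto).
    assert (Fbz : Fb (x,y) = 0).
    { unfold Fb. simpl. unfold pif. destruct (excluded_middle_informative (y <= N)%Z); [|auto].
      destruct Hc2 as [Hw|Hw]; [rewrite HuW; auto; ring|lia]. }
    unfold phi. rewrite Fbz. unfold Rmax at 2. destruct (Rle_dec (Ftop N B (x, y)) 0); unfold Rmax;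
      destruct (Rle_dec 0 0); try lra; destruct (Rle_dec 0 (Ftop N B (x, y))); lra. }
  assert (Hsub : forall z, Om z -> phi z - avg4 phi z <= pif (snd z = N) 1 0).
  { intros [a b] [Hb Hw]. cbn [fst snd] in Hb.
    assert (Hind : 0 <= pif (b = N) 1 0) by (unfold pif; destruct (excluded_middle_informative (b = N)); lra).
    assert (Hav0 : 0 <= avg4 phi (a,b)) by (apply avg4_nonneg; auto).
    assert (HFt : Ftop N B (a,b) <= avg4 phi (a,b) + pif (b = N) 1 0).
    { eapply Rle_trans; [apply (Ftop_sub N B (a,b) HB)|]. cbn [snd].
      apply Rplus_le_compat_r. apply avg4_mono. intros w. unfold phi.
      eapply Rle_trans; [apply Rmax_l|apply Rmax_r]. }
    assert (HFb : Fb (a,b) <= avg4 phi (a,b) + pif (b = N) 1 0).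
    { unfold Fb; cbn [snd]. destruct (Z_le_gt_dec b N) as [Hle|Hgt].
      - rewrite pif_T by auto. destruct (Z.eq_dec b N) as [->|Hne].
        + destruct (Rle_dec (IZR (Z.abs a)) B) as [Hx|Hx].
          * rewrite Hutop by auto. pose proof (Ftop_top N B a Hn HB Hx). lra.
          * rewrite Hutop0 by lra. lra.
        + rewrite (Huh (a,b)) by (simpl; auto; lia).
          assert (IZR N / 4 * avg4 u (a,b) <= avg4 phi (a,b)).
          { unfold avg4. 
            assert (Hw1 : forall w, (snd w <= N)%Z -> IZR N / 4 * u w <= phi w).
            { intros w Hw'. unfold phi. eapply Rle_trans; [|apply Rmax_r]. eapply Rle_trans; [|apply Rmax_r].
              unfold Fb. rewrite pif_T by auto. lra. }
            pose proof (Hw1 ((a+1)%Z,b) ltac:(cbn [fst snd]; lia)). pose proof (Hw1 ((a-1)%Z,b) ltac:(cbn [fst snd]; lia)).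
            pose proof (Hw1 (a,(b+1)%Z) ltac:(cbn [fst snd]; lia)). pose proof (Hw1 (a,(b-1)%Z) ltac:(cbn [fst snd]; lia)).
            lra. }
          lra.
      - rewrite pif_F by lia. lra. }
    unfold phi at 1. apply Rle_trans with (Rmax 0 (Rmax (Ftop N B (a, b)) (Fb (a, b))) - avg4 phi (a,b)); [lra|].
    assert (Rmax 0 (Rmax (Ftop N B (a, b)) (Fb (a, b))) <= avg4 phi (a,b) + pif (b = N) 1 0).
    { apply Rmax_lub; [lra|apply Rmax_lub; lra]. }
    cbn [snd]. lra. }
  pose proof (green Om (X + 1) (2 * N) phi h ltac:(lia) ltac:(lia) HOm Hhh) as G.
  set (g := fun x => pif (Om (x,N)) (h (x,N)) 0).
  assert (HL : phi (0%Z, (h0+1)%Z) <= boxsum (X + 1) (2 * N)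
     (fun z => pif (Om z) (nbsum z (fun w => pif (Om w) 0 (phi z * h w - h z * phi w))) 0)).
  { assert (Hterm : forall z w, Om z -> nb z w -> 0 <= pif (Om w) 0 (phi z * h w - h z * phi w)).
    { intros z w Hz Hnb. unfold pif. destruct (excluded_middle_informative (Om w)); [lra|].
      rewrite (Hbd w); [pose proof (Hphi0 z); pose proof (Hh0 w); nra| |auto].
      destruct z as [a b]. destruct Hz as [Hz _]. cbn [fst snd] in Hz.
      destruct Hnb as [E|[E|[E|E]]]; subst w; cbn [fst snd]; lia. }
    assert (Hnn : forall z, 0 <= pif (Om z) (nbsum z (fun w => pif (Om w) 0 (phi z * h w - h z * phi w))) 0).
    { intros [a b]. unfold pif at 1. destruct (excluded_middle_informative (Om (a,b))) as [Ho|]; [|lra].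
      unfold nbsum.
      pose proof (Hterm (a,b) ((a+1)%Z,b) Ho (or_introl eq_refl)).
      pose proof (Hterm (a,b) ((a-1)%Z,b) Ho (or_intror (or_introl eq_refl))).
      pose proof (Hterm (a,b) (a,(b+1)%Z) Ho (or_intror (or_intror (or_introl eq_refl)))).
      pose proof (Hterm (a,b) (a,(b-1)%Z) Ho (or_intror (or_intror (or_intror eq_refl)))).
      lra. }
    eapply Rle_trans; [|apply (boxsum_term (X+1) (2*N) _ 0%Z (h0+1)%Z); auto; lia].
    assert (Ho : Om (0%Z, (h0+1)%Z)) by (split; [cbn [fst snd]; lia|apply notW_axis; auto; lia]).
    cbv beta. rewrite pif_T by auto. unfold nbsum.
    pose proof (Hterm _ ((0+1)%Z,(h0+1)%Z) Ho (or_introl eq_refl)).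
    pose proof (Hterm _ ((0-1)%Z,(h0+1)%Z) Ho (or_intror (or_introl eq_refl))).
    pose proof (Hterm _ (0%Z,(h0+1+1)%Z) Ho (or_intror (or_intror (or_introl eq_refl)))).
    replace (h0 + 1 - 1)%Z with h0 by lia.
    assert (Hno : ~ Om (0%Z, h0)) by (intros [_ Hw]; apply Hw; left; unfold D0; simpl;
       pose proof (c0_nonneg alpha h0); unfold c0 in *; lia).
    rewrite (pif_F (Om (0%Z,h0))) by auto. rewrite Hhx. rewrite (Hbd (0%Z,h0)); [lra|cbn [fst snd]; lia|auto]. }
  assert (HR : boxsum (X + 1) (2 * N) (fun z => pif (Om z) (4 * (h z * (phi z - avg4 phi z))) 0)
                <= 4 * rsum (- (X + 1)) (Z.to_nat (2 * (X + 1))) g).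
  { eapply Rle_trans.
    - apply (boxsum_le _ _ _ (fun z => 4 * pif (snd z = N) (pif (Om z) (h z) 0) 0)).
      intros z. unfold pif at 1. destruct (excluded_middle_informative (Om z)) as [Ho|Ho].
      + pose proof (Hsub z Ho). pose proof (Hh0 z). unfold pif at 1 in H.
        destruct (excluded_middle_informative (snd z = N)).
        * rewrite pif_T, pif_T by auto. nra.
        * rewrite pif_F by auto. nra.
      + unfold pif. destruct (excluded_middle_informative (snd z = N)); [|lra].
        destruct (excluded_middle_informative (Om z)); [tauto|lra].
    - rewrite boxsum_scal. apply Rmult_le_compat_l; [lra|]. unfold boxsum. right.
      apply rsum_ext. intros x _. rewrite (rsum_point 0 _ _ N); [|lia|].
      + simpl. rewrite pif_T by auto. reflexivity.
      + intros y Hy. simpl. rewrite pif_F by auto. reflexivity. }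
  assert (Hg : Plim (psum g) >= cst / 16).
  { rewrite (psum_lim g (X + 1)).
    - assert (Fb (0%Z, (h0+1)%Z) <= phi (0%Z, (h0+1)%Z)).
      { unfold phi. eapply Rle_trans; [|apply Rmax_r]. apply Rmax_r. }
      unfold Fb in H. rewrite pif_T in H by (cbn [fst snd]; lia).
      assert (IZR N / 4 * (cst / IZR N) <= IZR N / 4 * u (0%Z, (h0 + 1)%Z)) by (apply Rmult_le_compat_l; lra).
      replace (IZR N / 4 * (cst / IZR N)) with (cst / 4) in H0 by (field; lra).
      lra.
    - intros x Hx. unfold g. rewrite pif_F; auto. intros [_ Hw]. apply Hw, HX; cbn [fst snd]; lia.
    - lia. }
  assert (E : (fun M : nat => sum_f_R0 (fun i : nat => HbarTerm W N (0%Z, h0) (Z.of_nat i - Z.of_nat M)) (2 * M)) = psum g).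
  2:{ unfold Hbar. fold W. rewrite E. exact Hg. }
  symmetry. apply functional_extensionality. intros M. unfold psum. apply sum_eq. intros i _.
  unfold g, HbarTerm. fold W. unfold pif.
  destruct (excluded_middle_informative (Om (Z.of_nat i - Z.of_nat M, N)%Z)) as [[_ Ho]|Ho];
  destruct (excluded_middle_informative (W (Z.of_nat i - Z.of_nat M, N)%Z)); try tauto.
  exfalso; apply Ho. split; [cbn [fst snd]; lia|auto].
Qed.

Theorem mainTheorem5 (alpha : R) (h0 : Z) (Halpha : 1 < alpha) (Hh0 : (0 <= h0)%Z) :
  exists c : R, 0 < c /\
    (exists K : nat, forall k : nat, (K <= k)%nat ->
        ProbBefore (0%Z, h0) (Lline (2 ^ Z.of_nat k)%Z) (What alpha h0)
          >= c * / 2 ^ k) /\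
    (exists N0 : Z, forall N : Z, (N0 <= N)%Z ->
        Hbar (What alpha h0) N (0%Z, h0) >= c).
Proof.
  destruct (part1 alpha h0 Halpha Hh0) as [c1 [Hc1 [K HK]]].
  destruct (part2 alpha h0 Halpha Hh0) as [c2 [Hc2 [N0 HN]]].
  exists (Rmin c1 c2). split; [apply Rmin_pos; auto|split].
  - exists K. intros k Hk. specialize (HK k Hk).
    assert (0 < / 2 ^ k) by (apply Rinv_0_lt_compat, pow_lt; lra).
    assert (Rmin c1 c2 * / 2 ^ k <= c1 * / 2 ^ k) by (apply Rmult_le_compat_r; [lra|apply Rmin_l]). lra.
  - exists N0. intros N HN'. specialize (HN N HN'). pose proof (Rmin_r c1 c2). lra.
Qed.
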